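(* Let $K>0$, $\gamma\geq2$, $\bar\rho>0$, $R>0$, and let $(\rho,u)$ be a $C^1$ solution on $\mathbb{R}$ of the one-dimensional Euler equations $$\rho_t+(\rho u)_x=0,\qquad \rho(u_t+uu_x)+P_x=0,\qquad P=K\rho^\gamma,$$ with initial data $(\rho(0,x),u(0,x))=(\bar\rho+\rho_0(x),u_0(x))$, $\operatorname{supp}(\rho_0,u_0)\subseteq\{x:|x|\leq R\}$, and with $\rho>0$ (non-vacuum). Let $\sigma=\sqrt{K\gamma\bar\rho^{\gamma-1}}$ and define $$H_4(t)=\int_{-\infty}^{+\infty}xu(t,x)\,dx,\qquad m_2(t)=\int_{-\infty}^{+\infty}(\rho(t,x)-\bar\rho)\,dx.$$ If $H_4(0)>\frac{8\sigma R^2}{3}$ and $m_2(0)\geq0$, then the $C^1$ solution blows up in finite time, i.e. its life span is finite. *)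

(* Defs.v *)
From Stdlib Require Import Reals Lra.
From Coquelicot Require Import Coquelicot.
Open Scope R_scope.

Definition cont_half (f : R -> R -> R) (t0 x0 : R) : Prop :=
  filterlim (fun p : R * R => f (fst p) (snd p))
            (within (fun p : R * R => 0 <= fst p) (locally (t0, x0)))
            (locally (f t0 x0)).

Definition dt (f : R -> R -> R) (t x : R) : R := Derive (fun s => f s x) t.
Definition dx (f : R -> R -> R) (t x : R) : R := Derive (fun y => f t y) x.

Definition C1_half (f : R -> R -> R) : Prop :=
  (forall t x, 0 <= t -> ex_derive (fun y => f t y) x) /\
  (forall t x, 0 < t -> ex_derive (fun s => f s x) t) /\
  (forall t x, 0 <= t -> cont_half f t x) /\
  (forall t x, 0 <= t -> cont_half (dx f) t x) /\
  (exists ft : R -> R -> R,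
      (forall t x, 0 < t -> ft t x = dt f t x) /\
      (forall t x, 0 <= t -> cont_half ft t x)).

Definition global_C1_euler_solution (K gamma : R) (rho u : R -> R -> R) : Prop :=
  C1_half rho /\ C1_half u /\
  (forall t x, 0 <= t -> 0 < rho t x) /\
  (forall t x, 0 < t ->
     dt rho t x + Derive (fun y => rho t y * u t y) x = 0) /\
  (forall t x, 0 < t ->
     rho t x * (dt u t x + u t x * dx u t x)
     + Derive (fun y => K * Rpower (rho t y) gamma) x = 0).

(* Main.v *)
From Stdlib Require Import Reals Lra Classical.
From Coquelicot Require Import Coquelicot.
Require Import Defs.
Open Scope R_scope.

Lemma Rmax0_lip a b : Rabs (Rmax 0 a - Rmax 0 b) <= Rabs (a - b).
Proof. unfold Rmax; destruct (Rle_dec 0 a); destruct (Rle_dec 0 b);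
  unfold Rabs; repeat destruct Rcase_abs; lra. Qed.

Lemma ballR x e y : ball x e y <-> Rabs (y - x) < e.
Proof. reflexivity. Qed.

Lemma cont_half_2d f :
  (forall t x, 0 <= t -> cont_half f t x) ->
  forall t x, continuity_2d_pt (fun s y => f (Rmax 0 s) y) t x.
Proof.
intros Hf t x. apply continuity_2d_pt_filterlim.
assert (H := Hf (Rmax 0 t) x (Rmax_l _ _)).
unfold cont_half in H.
apply (filterlim_comp _ _ _ (fun z : R * R => (Rmax 0 (fst z), snd z)) (fun p : R*R => f (fst p) (snd p)) (locally (t,x)) (within (fun p : R * R => 0 <= fst p) (locally (Rmax 0 t, x)))); [|exact H].
intros P [eps HP]. exists eps. intros [s y] [H1 H2]. simpl in *.
apply HP. split; simpl.
- apply ballR. apply ballR in H1. eapply Rle_lt_trans;[apply Rmax0_lip|exact H1].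
- exact H2.
- simpl. apply Rmax_l.
Qed.

Lemma RI_plus (f g : R -> R) a b : ex_RInt f a b -> ex_RInt g a b ->
  RInt (fun x => f x + g x) a b = RInt f a b + RInt g a b.
Proof. intros; apply (RInt_plus (V := R_CompleteNormedModule)); auto. Qed.
Lemma RI_minus (f g : R -> R) a b : ex_RInt f a b -> ex_RInt g a b ->
  RInt (fun x => f x - g x) a b = RInt f a b - RInt g a b.
Proof. intros; apply (RInt_minus (V := R_CompleteNormedModule)); auto. Qed.
Lemma RI_scal (f : R -> R) c a b : ex_RInt f a b ->
  RInt (fun x => c * f x) a b = c * RInt f a b.
Proof. intros; apply (RInt_scal (V := R_CompleteNormedModule)); auto. Qed.
Lemma RI_const (c a b : R) : RInt (fun _ => c) a b = (b - a) * c.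
Proof. apply (RInt_const (V := R_CompleteNormedModule)). Qed.
Lemma RI_ext (f g : R -> R) a b : (forall x, Rmin a b < x < Rmax a b -> f x = g x) ->
  RInt f a b = RInt g a b.
Proof. intros; apply (RInt_ext (V := R_CompleteNormedModule)); auto. Qed.
Lemma RI_Chasles (f : R -> R) a b c : ex_RInt f a b -> ex_RInt f b c ->
  RInt f a b + RInt f b c = RInt f a c.
Proof. intros; apply (RInt_Chasles (V := R_CompleteNormedModule)); auto. Qed.
Lemma exR_c (f : R -> R) a b : (forall y, continuity_pt f y) -> ex_RInt f a b.
Proof. intros H. apply (@ex_RInt_continuous R_CompleteNormedModule). intros z _.
  apply continuity_pt_filterlim; auto. Qed.
Lemma RI_deriv (F f : R -> R) a b : (forall y, Rmin a b <= y <= Rmax a b -> is_derive F y (f y)) ->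
  (forall y, continuity_pt f y) -> RInt f a b = F b - F a.
Proof. intros H1 H2. apply (is_RInt_unique (V := R_CompleteNormedModule)).
  apply (is_RInt_derive (V := R_CompleteNormedModule)); auto.
  intros; apply continuity_pt_filterlim; auto. Qed.
Lemma RI_zero (f : R -> R) a b : (forall x, Rmin a b < x < Rmax a b -> f x = 0) -> RInt f a b = 0.
Proof. intros H. rewrite (RI_ext f (fun _ => 0)); auto. rewrite RI_const. apply Rmult_0_r. Qed.

Lemma Rpower_m1 r a : 0 < r -> Rpower r (a - 1) = Rpower r a / r.
Proof. intros Hr. unfold Rminus. rewrite Rpower_plus, Rpower_Ropp, Rpower_1; auto. Qed.

Lemma Rpower_pos r a : 0 < Rpower r a.
Proof. unfold Rpower. apply exp_pos. Qed.

Lemma is_derive_Rpower r a : 0 < r -> is_derive (fun x => Rpower x a) r (a * Rpower r (a - 1)).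
Proof. intros Hr. apply is_derive_Reals. apply derivable_pt_lim_power. exact Hr. Qed.

Section Sp.
Variables (K gamma : R).
Hypothesis HK : 0 < K.
Hypothesis Hg : 2 <= gamma.

Definition kg := K * gamma.
Definition cs r := sqrt kg * Rpower r ((gamma - 1) / 2).
Definition gg r := 2 / (gamma - 1) * cs r.
Definition hh r := kg / (gamma - 1) * Rpower r (gamma - 1).

Lemma kg_pos : 0 < kg. Proof. unfold kg; nra. Qed.

Lemma cs_pos r : 0 < cs r.
Proof. unfold cs. apply Rmult_lt_0_compat. apply sqrt_lt_R0, kg_pos. apply Rpower_pos. Qed.

Lemma cs_sq r : cs r * cs r = kg * Rpower r (gamma - 1).
Proof.
unfold cs. replace (sqrt kg * Rpower r ((gamma - 1) / 2) * (sqrt kg * Rpower r ((gamma - 1) / 2)))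
 with ((sqrt kg * sqrt kg) * (Rpower r ((gamma - 1) / 2) * Rpower r ((gamma - 1) / 2))) by ring.
rewrite sqrt_sqrt by (left; apply kg_pos). rewrite <- Rpower_plus. f_equal. f_equal. field.
Qed.

Lemma cs_sigma rb : 0 < rb -> cs rb = sqrt (K * gamma * Rpower rb (gamma - 1)).
Proof.
intros Hr. unfold cs. fold kg. rewrite sqrt_mult; try (left; apply kg_pos); try (left; apply Rpower_pos).
f_equal. rewrite <- Rpower_sqrt by apply Rpower_pos. rewrite Rpower_mult. reflexivity.
Qed.

Lemma cs_deriv r : 0 < r -> is_derive cs r ((gamma - 1) / 2 * cs r / r).
Proof.
intros Hr. unfold cs.
replace ((gamma - 1) / 2 * (sqrt kg * Rpower r ((gamma - 1) / 2)) / r) with (sqrt kg * ((gamma - 1) / 2 * Rpower r ((gamma - 1) / 2 - 1))).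
apply (is_derive_scal (fun x => Rpower x ((gamma - 1) / 2))). apply is_derive_Rpower; auto.
rewrite Rpower_m1 by auto. field. lra.
Qed.

Lemma gg_deriv r : 0 < r -> is_derive gg r (cs r / r).
Proof.
intros Hr. unfold gg.
replace (cs r / r) with (2 / (gamma - 1) * ((gamma - 1) / 2 * cs r / r)) by (field; lra).
apply (is_derive_scal cs). apply cs_deriv; auto.
Qed.

Lemma hh_deriv r : 0 < r -> is_derive hh r (cs r * cs r / r).
Proof.
intros Hr. unfold hh. rewrite cs_sq.
replace (kg * Rpower r (gamma - 1) / r) with (kg / (gamma - 1) * ((gamma - 1) * Rpower r (gamma - 1 - 1))).
apply (is_derive_scal (fun x => Rpower x (gamma - 1))). apply is_derive_Rpower; auto.
rewrite (Rpower_m1 r (gamma - 1)) by auto. field. lra.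
Qed.

Lemma P_deriv r : 0 < r -> is_derive (fun x => K * Rpower x gamma) r (cs r * cs r).
Proof.
intros Hr. rewrite cs_sq. unfold kg. rewrite Rmult_assoc. apply (is_derive_scal (fun x => Rpower x gamma)). apply is_derive_Rpower; auto.
Qed.

Lemma cs_cont r : 0 < r -> continuity_pt cs r.
Proof. intros Hr. apply derivable_continuous_pt. exists ((gamma - 1) / 2 * cs r / r).
  apply is_derive_Reals, cs_deriv; auto. Qed.

Lemma gg_inj a b : 0 < a -> 0 < b -> gg a = gg b -> a = b.
Proof.
intros Ha Hb H. unfold gg, cs in H.
assert (Hs : 0 < sqrt kg) by (apply sqrt_lt_R0, kg_pos).
assert (He : 0 < (gamma - 1) / 2) by lra.
assert (H2 : Rpower a ((gamma - 1) / 2) = Rpower b ((gamma - 1) / 2)).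
{ apply (Rmult_eq_reg_l (2 / (gamma - 1) * sqrt kg)). rewrite !Rmult_assoc. exact H.
  apply Rgt_not_eq. apply Rmult_lt_0_compat; auto. apply Rdiv_lt_0_compat; lra. }
destruct (Rtotal_order a b) as [Hl|[Hl|Hl]]; auto.
- exfalso. assert (Rpower a ((gamma - 1) / 2) < Rpower b ((gamma - 1) / 2)) by (apply Rlt_Rpower_l; lra). lra.
- exfalso. assert (Rpower b ((gamma - 1) / 2) < Rpower a ((gamma - 1) / 2)) by (apply Rlt_Rpower_l; lra). lra.
Qed.

End Sp.

Lemma isd_plus (f g : R -> R) (x a b : R) : is_derive f x a -> is_derive g x b ->
  is_derive (fun y => f y + g y) x (a + b).
Proof. intros; apply (is_derive_plus f g); auto. Qed.
Lemma isd_minus (f g : R -> R) (x a b : R) : is_derive f x a -> is_derive g x b ->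
  is_derive (fun y => f y - g y) x (a - b).
Proof. intros; apply (is_derive_minus f g); auto. Qed.
Lemma isd_mult (f g : R -> R) (x a b : R) : is_derive f x a -> is_derive g x b ->
  is_derive (fun y => f y * g y) x (a * g x + f x * b).
Proof. intros; apply (is_derive_mult f g); auto. intros; apply Rmult_comm. Qed.
Lemma isd_scal (f : R -> R) (c x a : R) : is_derive f x a ->
  is_derive (fun y => c * f y) x (c * a).
Proof. intros; apply (is_derive_scal f); auto. Qed.
Lemma isd_const (c x : R) : is_derive (fun _ => c) x 0.
Proof. apply (is_derive_const c). Qed.
Lemma isd_id (x : R) : is_derive (fun y => y) x 1.
Proof. apply (is_derive_id x). Qed.
Lemma isd_comp (f g : R -> R) (x df dg : R) : is_derive f (g x) df -> is_derive g x dg ->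
  is_derive (fun y => f (g y)) x (dg * df).
Proof. intros; apply (is_derive_comp f g); auto. Qed.
Lemma isd_ext (f g : R -> R) (x a b : R) : is_derive f x a -> a = b -> (forall y, f y = g y) -> is_derive g x b.
Proof. intros H -> He. apply (is_derive_ext f); eauto. Qed.
Lemma isd_eq (f : R -> R) (x a b : R) : is_derive f x a -> a = b -> is_derive f x b.
Proof. intros H ->; auto. Qed.

Section Sol.
Variables (K gamma rhobar : R) (rho u rt ut : R -> R -> R).
Hypothesis HK : 0 < K.
Hypothesis Hg : 2 <= gamma.
Hypothesis Hrb : 0 < rhobar.
Hypothesis Hr_dx : forall t x, 0 <= t -> ex_derive (fun y => rho t y) x.
Hypothesis Hr_dt : forall t x, 0 < t -> ex_derive (fun s => rho s x) t.
Hypothesis Hr_c : forall t x, 0 <= t -> cont_half rho t x.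
Hypothesis Hr_dxc : forall t x, 0 <= t -> cont_half (dx rho) t x.
Hypothesis Hrt_eq : forall t x, 0 < t -> rt t x = dt rho t x.
Hypothesis Hrt_c : forall t x, 0 <= t -> cont_half rt t x.
Hypothesis Hu_dx : forall t x, 0 <= t -> ex_derive (fun y => u t y) x.
Hypothesis Hu_dt : forall t x, 0 < t -> ex_derive (fun s => u s x) t.
Hypothesis Hu_c : forall t x, 0 <= t -> cont_half u t x.
Hypothesis Hu_dxc : forall t x, 0 <= t -> cont_half (dx u) t x.
Hypothesis Hut_eq : forall t x, 0 < t -> ut t x = dt u t x.
Hypothesis Hut_c : forall t x, 0 <= t -> cont_half ut t x.
Hypothesis Hpos : forall t x, 0 <= t -> 0 < rho t x.
Hypothesis Hmass : forall t x, 0 < t ->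
     dt rho t x + Derive (fun y => rho t y * u t y) x = 0.
Hypothesis Hmom : forall t x, 0 < t ->
     rho t x * (dt u t x + u t x * dx u t x)
     + Derive (fun y => K * Rpower (rho t y) gamma) x = 0.

Lemma r_dx t x : 0 <= t -> is_derive (fun y => rho t y) x (dx rho t x).
Proof. intros; apply Derive_correct; auto. Qed.
Lemma u_dx t x : 0 <= t -> is_derive (fun y => u t y) x (dx u t x).
Proof. intros; apply Derive_correct; auto. Qed.
Lemma r_dt t x : 0 < t -> is_derive (fun s => rho s x) t (rt t x).
Proof. intros; rewrite Hrt_eq; auto; apply Derive_correct; auto. Qed.
Lemma u_dt t x : 0 < t -> is_derive (fun s => u s x) t (ut t x).
Proof. intros; rewrite Hut_eq; auto; apply Derive_correct; auto. Qed.

Lemma mass' t x : 0 < t -> rt t x + dx rho t x * u t x + rho t x * dx u t x = 0.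
Proof.
intros Ht. rewrite Hrt_eq; auto. rewrite <- (Hmass t x Ht). rewrite (Derive_mult (fun y => rho t y) (fun y => u t y)); [ | apply Hr_dx; lra | apply Hu_dx; lra].
unfold dx. ring.
Qed.

Lemma mom' t x : 0 < t ->
  rho t x * (ut t x + u t x * dx u t x) + cs K gamma (rho t x) * cs K gamma (rho t x) * dx rho t x = 0.
Proof.
intros Ht. rewrite Hut_eq; auto. rewrite <- (Hmom t x Ht). f_equal.
symmetry. apply is_derive_unique.
eapply isd_eq. apply (isd_comp (fun r => K * Rpower r gamma) (fun y => rho t y)).
apply P_deriv; auto. apply Hpos; lra. apply r_dx; lra. ring.
Qed.

Lemma comp_rho_x (G G' : R -> R) t x : 0 <= t -> (forall r, 0 < r -> is_derive G r (G' r)) ->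
  is_derive (fun y => G (rho t y)) x (G' (rho t x) * dx rho t x).
Proof. intros Ht HG. eapply isd_eq. apply (isd_comp G (fun y => rho t y)). apply HG, Hpos; auto.
  apply r_dx; auto. ring. Qed.

Lemma comp_rho_t (G G' : R -> R) t x : 0 < t -> (forall r, 0 < r -> is_derive G r (G' r)) ->
  is_derive (fun s => G (rho s x)) t (G' (rho t x) * rt t x).
Proof. intros Ht HG. eapply isd_eq. apply (isd_comp G (fun s => rho s x)). apply HG, Hpos; lra.
  apply r_dt; auto. ring. Qed.

(* Riemann invariants *)
Definition Wv (e : R) t x := u t x + e * (gg K gamma (rho t x) - gg K gamma rhobar).
Definition lam (e : R) t x := u t x + e * cs K gamma (rho t x).
Definition Wx e t x := dx u t x + e * (cs K gamma (rho t x) / rho t x * dx rho t x).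
Definition Wt e t x := ut t x + e * (cs K gamma (rho t x) / rho t x * rt t x).
Definition lamx e t x := dx u t x + e * ((gamma - 1) / 2 * cs K gamma (rho t x) / rho t x * dx rho t x).

Lemma Wv_dx e t x : 0 <= t -> is_derive (fun y => Wv e t y) x (Wx e t x).
Proof.
intros Ht. unfold Wv, Wx. apply isd_plus. apply u_dx; auto.
apply isd_scal. eapply isd_eq. apply isd_minus. apply (comp_rho_x (gg K gamma) (fun r => cs K gamma r / r)); auto.
intros r Hr; apply gg_deriv; auto. apply isd_const. ring.
Qed.

Lemma Wv_dt e t x : 0 < t -> is_derive (fun s => Wv e s x) t (Wt e t x).
Proof.
intros Ht. unfold Wv, Wt. apply isd_plus. apply u_dt; auto.
apply isd_scal. eapply isd_eq. apply isd_minus. apply (comp_rho_t (gg K gamma) (fun r => cs K gamma r / r)); auto.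
intros r Hr; apply gg_deriv; auto. apply isd_const. ring.
Qed.

Lemma lam_dx e t x : 0 <= t -> is_derive (fun y => lam e t y) x (lamx e t x).
Proof.
intros Ht. unfold lam, lamx. apply isd_plus. apply u_dx; auto.
apply isd_scal. eapply isd_eq. apply (comp_rho_x (cs K gamma) (fun r => (gamma - 1) / 2 * cs K gamma r / r)); auto.
intros r Hr; apply cs_deriv; auto. ring.
Qed.

Lemma transport e t x : e * e = 1 -> 0 < t -> Wt e t x + lam e t x * Wx e t x = 0.
Proof.
intros He Ht. unfold Wt, lam, Wx.
assert (Hr := Hpos t x (Rlt_le _ _ Ht)).
assert (H1 := mass' t x Ht). assert (H2 := mom' t x Ht).
set (c := cs K gamma (rho t x)) in *. set (r := rho t x) in *.
apply (Rmult_eq_reg_l r); [|lra].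
replace (r * (ut t x + e * (c / r * rt t x) + (u t x + e * c) * (dx u t x + e * (c / r * dx rho t x))))
 with ((r * (ut t x + u t x * dx u t x) + (e * e) * c * c * dx rho t x) + e * c * (rt t x + dx rho t x * u t x + r * dx u t x)) by (field; lra).
rewrite He, H1. lra.
Qed.

End Sol.

Lemma c2d_x (F : R -> R -> R) t x : 0 <= t ->
  continuity_2d_pt (fun s y => F (Rmax 0 s) y) t x -> continuity_pt (F t) x.
Proof.
intros Ht H. apply continuity_pt_locally. intros eps. destruct (H eps) as [d Hd].
exists d. intros y Hy. assert (E : Rmax 0 t = t) by (apply Rmax_right; auto).
specialize (Hd t y). rewrite E in Hd. apply Hd. rewrite Rminus_eq_0, Rabs_R0. apply cond_pos. exact Hy.
Qed.

Lemma c2d_xc (F : R -> R -> R) t x : 0 <= t ->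
  continuity_2d_pt (fun s y => F (Rmax 0 s) y) t x -> continuous (F t) x.
Proof. intros; apply continuity_pt_filterlim; apply c2d_x; auto. Qed.

Lemma cont_Dt_loc (F G : R -> R -> R) t x : 0 < t ->
  (forall s y, 0 < s -> is_derive (fun z => F z y) s (G s y)) ->
  continuity_2d_pt (fun s y => G (Rmax 0 s) y) t x ->
  continuity_2d_pt (fun s y => Derive (fun z => F z y) s) t x.
Proof.
intros Ht HD HC. apply continuity_2d_pt_ext_loc with (f := fun s y => G (Rmax 0 s) y); auto.
exists (mkposreal t Ht). intros s y Hs _. simpl in Hs.
assert (0 < s) by (apply Rabs_def2 in Hs; lra).
rewrite Rmax_right by lra. symmetry. apply is_derive_unique. auto.
Qed.

Lemma c2d_comp (G : R -> R) (F : R -> R -> R) t x :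
  continuity_pt G (F t x) -> continuity_2d_pt F t x -> continuity_2d_pt (fun s y => G (F s y)) t x.
Proof. intros; apply continuity_1d_2d_pt_comp; auto. Qed.

Lemma c2d_const c t x : continuity_2d_pt (fun _ _ => c) t x.
Proof. apply continuity_2d_pt_const. Qed.
Lemma c2d_id2 t x : continuity_2d_pt (fun _ y => y) t x.
Proof. apply continuity_2d_pt_id2. Qed.

Section Sol.
Variables (K gamma rhobar : R) (rho u rt ut : R -> R -> R).
Hypothesis HK : 0 < K.
Hypothesis Hg : 2 <= gamma.
Hypothesis Hrb : 0 < rhobar.
Hypothesis Hr_c : forall t x, 0 <= t -> cont_half rho t x.
Hypothesis Hr_dxc : forall t x, 0 <= t -> cont_half (dx rho) t x.
Hypothesis Hrt_c : forall t x, 0 <= t -> cont_half rt t x.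
Hypothesis Hu_c : forall t x, 0 <= t -> cont_half u t x.
Hypothesis Hu_dxc : forall t x, 0 <= t -> cont_half (dx u) t x.
Hypothesis Hut_c : forall t x, 0 <= t -> cont_half ut t x.
Hypothesis Hpos : forall t x, 0 <= t -> 0 < rho t x.

Lemma c_rho t x : continuity_2d_pt (fun s y => rho (Rmax 0 s) y) t x.
Proof. apply cont_half_2d; auto. Qed.
Lemma c_u t x : continuity_2d_pt (fun s y => u (Rmax 0 s) y) t x.
Proof. apply cont_half_2d; auto. Qed.
Lemma c_rt t x : continuity_2d_pt (fun s y => rt (Rmax 0 s) y) t x.
Proof. apply cont_half_2d; auto. Qed.
Lemma c_ut t x : continuity_2d_pt (fun s y => ut (Rmax 0 s) y) t x.
Proof. apply cont_half_2d; auto. Qed.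
Lemma c_rx t x : continuity_2d_pt (fun s y => dx rho (Rmax 0 s) y) t x.
Proof. apply cont_half_2d; auto. Qed.
Lemma c_ux t x : continuity_2d_pt (fun s y => dx u (Rmax 0 s) y) t x.
Proof. apply cont_half_2d; auto. Qed.

Lemma c_G (G : R -> R) t x : (forall r, 0 < r -> continuity_pt G r) ->
  continuity_2d_pt (fun s y => G (rho (Rmax 0 s) y)) t x.
Proof. intros HG. apply c2d_comp. apply HG, Hpos, Rmax_l. apply c_rho. Qed.

Lemma cont_deriv (G G' : R -> R) r : is_derive G r (G' r) -> continuity_pt G r.
Proof. intros H. apply continuity_pt_filterlim. apply (ex_derive_continuous G). exists (G' r); auto. Qed.

Lemma c_cs t x : continuity_2d_pt (fun s y => cs K gamma (rho (Rmax 0 s) y)) t x.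
Proof. apply c_G. intros r Hr. apply cs_cont; auto. Qed.
Lemma c_gg t x : continuity_2d_pt (fun s y => gg K gamma (rho (Rmax 0 s) y)) t x.
Proof. apply c_G. intros r Hr. apply (cont_deriv _ (fun r => cs K gamma r / r)). apply gg_deriv; auto. Qed.
Lemma c_hh t x : continuity_2d_pt (fun s y => hh K gamma (rho (Rmax 0 s) y)) t x.
Proof. apply c_G. intros r Hr. apply (cont_deriv _ (fun r => cs K gamma r * cs K gamma r / r)). apply hh_deriv; auto. Qed.
Lemma c_inv t x : continuity_2d_pt (fun s y => / (rho (Rmax 0 s) y)) t x.
Proof. apply continuity_2d_pt_inv. apply c_rho. apply Rgt_not_eq, Hpos, Rmax_l. Qed.

End Sol.

Lemma locally_pos (P : R -> Prop) t : 0 < t -> (forall y, 0 < y -> P y) -> locally t P.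
Proof.
intros Ht HP. exists (mkposreal t Ht). intros y Hy. apply HP.
change (Rabs (y - t) < t) in Hy. apply Rabs_def2 in Hy. lra.
Qed.

Lemma locally_2d_pos (P : R -> R -> Prop) t x : 0 < t -> (forall s y, 0 < s -> P s y) -> locally_2d P t x.
Proof.
intros Ht HP. exists (mkposreal t Ht). intros s y Hs _. apply HP. simpl in Hs. apply Rabs_def2 in Hs. lra.
Qed.

Section Sol.
Variables (K gamma rhobar : R) (rho u rt ut : R -> R -> R).
Hypothesis HK : 0 < K.
Hypothesis Hg : 2 <= gamma.
Hypothesis Hrb : 0 < rhobar.
Hypothesis Hr_dx : forall t x, 0 <= t -> ex_derive (fun y => rho t y) x.
Hypothesis Hr_dt : forall t x, 0 < t -> ex_derive (fun s => rho s x) t.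
Hypothesis Hr_c : forall t x, 0 <= t -> cont_half rho t x.
Hypothesis Hr_dxc : forall t x, 0 <= t -> cont_half (dx rho) t x.
Hypothesis Hrt_eq : forall t x, 0 < t -> rt t x = dt rho t x.
Hypothesis Hrt_c : forall t x, 0 <= t -> cont_half rt t x.
Hypothesis Hu_dx : forall t x, 0 <= t -> ex_derive (fun y => u t y) x.
Hypothesis Hu_dt : forall t x, 0 < t -> ex_derive (fun s => u s x) t.
Hypothesis Hu_c : forall t x, 0 <= t -> cont_half u t x.
Hypothesis Hu_dxc : forall t x, 0 <= t -> cont_half (dx u) t x.
Hypothesis Hut_eq : forall t x, 0 < t -> ut t x = dt u t x.
Hypothesis Hut_c : forall t x, 0 <= t -> cont_half ut t x.
Hypothesis Hpos : forall t x, 0 <= t -> 0 < rho t x.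
Hypothesis Hmass : forall t x, 0 < t ->
     dt rho t x + Derive (fun y => rho t y * u t y) x = 0.
Hypothesis Hmom : forall t x, 0 < t ->
     rho t x * (dt u t x + u t x * dx u t x)
     + Derive (fun y => K * Rpower (rho t y) gamma) x = 0.

Local Notation W := (Wv K gamma rhobar rho u).
Local Notation WT := (Wt K gamma rho rt ut).
Local Notation WX := (Wx K gamma rho u).
Local Notation LAM := (lam K gamma rho u).
Local Notation LAMX := (lamx K gamma rho u).

Ltac c2 := unfold Rdiv; repeat first [
    (apply c_rho; auto) | (apply c_u; auto) | (apply c_rt; auto) | (apply c_ut; auto)
  | (apply c_rx; auto) | (apply c_ux; auto) | (apply c_cs; auto) | (apply c_gg; auto)
  | (apply c_hh; auto) | (apply c_inv; auto) | apply c2d_const | apply c2d_id2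
  | apply continuity_2d_pt_plus | apply continuity_2d_pt_minus
  | apply continuity_2d_pt_mult | apply continuity_2d_pt_opp ].

Lemma c2_W e t x : continuity_2d_pt (fun s y => W e (Rmax 0 s) y) t x.
Proof. unfold Wv. c2. Qed.
Lemma c2_WT e t x : continuity_2d_pt (fun s y => WT e (Rmax 0 s) y) t x.
Proof. unfold Wt. c2. Qed.
Lemma c2_WX e t x : continuity_2d_pt (fun s y => WX e (Rmax 0 s) y) t x.
Proof. unfold Wx. c2. Qed.
Lemma c2_LAM e t x : continuity_2d_pt (fun s y => LAM e (Rmax 0 s) y) t x.
Proof. unfold lam. c2. Qed.
Lemma c2_LAMX e t x : continuity_2d_pt (fun s y => LAMX e (Rmax 0 s) y) t x.
Proof. unfold lamx. c2. Qed.


Definition ph s y := W 1 s y * W 1 s y + W (-1) s y * W (-1) s y.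
Definition pht s y := 2 * W 1 s y * WT 1 s y + 2 * W (-1) s y * WT (-1) s y.

Lemma c2_ph t x : continuity_2d_pt (fun s y => ph (Rmax 0 s) y) t x.
Proof. unfold ph. repeat first [apply c2_W | apply continuity_2d_pt_plus | apply continuity_2d_pt_mult]. Qed.
Lemma c2_pht t x : continuity_2d_pt (fun s y => pht (Rmax 0 s) y) t x.
Proof. unfold pht. repeat first [apply c2_W | apply c2_WT | apply c2d_const | apply continuity_2d_pt_plus | apply continuity_2d_pt_mult]. Qed.

Lemma ph_dt t y : 0 < t -> is_derive (fun s => ph s y) t (pht t y).
Proof.
intros Ht. unfold ph, pht.
eapply isd_eq. apply isd_plus; apply isd_mult; apply Wv_dt; auto. cbv beta; ring.
Qed.

Lemma Dph_cont t x : 0 < t -> continuity_2d_pt (fun s y => Derive (fun z => ph z y) s) t x.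
Proof. intros Ht. apply (cont_Dt_loc ph pht); auto. intros; apply ph_dt; auto. apply c2_pht. Qed.

Lemma cp_ph t y : 0 <= t -> continuity_pt (ph t) y.
Proof. intros Ht. apply (c2d_x ph); auto. apply c2_ph. Qed.

Lemma exR_ph t a b : 0 <= t -> ex_RInt (ph t) a b.
Proof. intros Ht. apply (@ex_RInt_continuous R_CompleteNormedModule). intros z _. apply continuity_pt_filterlim, cp_ph; auto. Qed.

Lemma E_deriv a0 b0 sp t : 0 < t ->
  is_derive (fun tau => RInt (ph tau) (a0 + sp * tau) (b0 - sp * tau)) t
   (RInt (fun y => Derive (fun z => ph z y) t) (a0 + sp * t) (b0 - sp * t)
    + - ph t (a0 + sp * t) * sp + ph t (b0 - sp * t) * (- sp)).
Proof.
intros Ht.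
apply (is_derive_RInt_param_bound_comp ph (fun tau => a0 + sp * tau) (fun tau => b0 - sp * tau)).
- apply locally_pos; auto. intros; apply exR_ph; lra.
- exists (mkposreal 1 Rlt_0_1). apply locally_pos; auto. intros; apply exR_ph; lra.
- exists (mkposreal 1 Rlt_0_1). apply locally_pos; auto. intros; apply exR_ph; lra.
- eapply isd_eq. apply isd_plus. apply isd_const. apply isd_scal, isd_id. ring.
- eapply isd_eq. apply isd_minus. apply isd_const. apply isd_scal, isd_id. ring.
- exists (mkposreal 1 Rlt_0_1). apply locally_pos; auto. intros y Hy z _. exists (pht y z). apply ph_dt; auto.
- intros; apply Dph_cont; auto.
- apply locally_2d_pos; auto. intros; apply Dph_cont; auto.
- apply locally_2d_pos; auto. intros; apply Dph_cont; auto.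
- apply cp_ph; lra.
- apply cp_ph; lra.
Qed.

End Sol.

Lemma cp_plus (f g : R -> R) x : continuity_pt f x -> continuity_pt g x -> continuity_pt (fun y => f y + g y) x.
Proof. intros; apply continuity_pt_plus; auto. Qed.
Lemma cp_minus (f g : R -> R) x : continuity_pt f x -> continuity_pt g x -> continuity_pt (fun y => f y - g y) x.
Proof. intros; apply continuity_pt_minus; auto. Qed.
Lemma cp_mult (f g : R -> R) x : continuity_pt f x -> continuity_pt g x -> continuity_pt (fun y => f y * g y) x.
Proof. intros; apply continuity_pt_mult; auto. Qed.
Lemma cp_const (c x : R) : continuity_pt (fun _ => c) x.
Proof. apply continuity_pt_const. intros a b; auto. Qed.
Lemma cp_opp (f : R -> R) x : continuity_pt f x -> continuity_pt (fun y => - f y) x.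
Proof. intros; apply continuity_pt_opp; auto. Qed.
Lemma cp_id (x : R) : continuity_pt (fun y => y) x.
Proof. apply derivable_continuous_pt, derivable_pt_id. Qed.
Section Sol.
Variables (K gamma rhobar : R) (rho u rt ut : R -> R -> R).
Hypothesis HK : 0 < K.
Hypothesis Hg : 2 <= gamma.
Hypothesis Hrb : 0 < rhobar.
Hypothesis Hr_dx : forall t x, 0 <= t -> ex_derive (fun y => rho t y) x.
Hypothesis Hr_dt : forall t x, 0 < t -> ex_derive (fun s => rho s x) t.
Hypothesis Hr_c : forall t x, 0 <= t -> cont_half rho t x.
Hypothesis Hr_dxc : forall t x, 0 <= t -> cont_half (dx rho) t x.
Hypothesis Hrt_eq : forall t x, 0 < t -> rt t x = dt rho t x.
Hypothesis Hrt_c : forall t x, 0 <= t -> cont_half rt t x.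
Hypothesis Hu_dx : forall t x, 0 <= t -> ex_derive (fun y => u t y) x.
Hypothesis Hu_dt : forall t x, 0 < t -> ex_derive (fun s => u s x) t.
Hypothesis Hu_c : forall t x, 0 <= t -> cont_half u t x.
Hypothesis Hu_dxc : forall t x, 0 <= t -> cont_half (dx u) t x.
Hypothesis Hut_eq : forall t x, 0 < t -> ut t x = dt u t x.
Hypothesis Hut_c : forall t x, 0 <= t -> cont_half ut t x.
Hypothesis Hpos : forall t x, 0 <= t -> 0 < rho t x.
Hypothesis Hmass : forall t x, 0 < t ->
     dt rho t x + Derive (fun y => rho t y * u t y) x = 0.
Hypothesis Hmom : forall t x, 0 < t ->
     rho t x * (dt u t x + u t x * dx u t x)
     + Derive (fun y => K * Rpower (rho t y) gamma) x = 0.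

Local Notation W := (Wv K gamma rhobar rho u).
Local Notation WT := (Wt K gamma rho rt ut).
Local Notation WX := (Wx K gamma rho u).
Local Notation LAM := (lam K gamma rho u).
Local Notation LAMX := (lamx K gamma rho u).

Local Notation PH := (ph K gamma rhobar rho u).
Local Notation PHT := (pht K gamma rhobar rho u rt ut).

Lemma cp_W e t x : 0 <= t -> continuity_pt (fun y => W e t y) x.
Proof. intros; apply (c2d_x (W e)); auto. apply c2_W; auto. Qed.
Lemma cp_WX e t x : 0 <= t -> continuity_pt (fun y => WX e t y) x.
Proof. intros; apply (c2d_x (WX e)); auto. apply c2_WX; auto. Qed.
Lemma cp_LAM e t x : 0 <= t -> continuity_pt (fun y => LAM e t y) x.
Proof. intros; apply (c2d_x (LAM e)); auto. apply c2_LAM; auto. Qed.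
Lemma cp_LAMX e t x : 0 <= t -> continuity_pt (fun y => LAMX e t y) x.
Proof. intros; apply (c2d_x (LAMX e)); auto. apply c2_LAMX; auto. Qed.

Ltac c1 := repeat first [ (apply cp_W; lra) | (apply cp_WX; lra) | (apply cp_LAM; lra) | (apply cp_LAMX; lra)
  | apply cp_const | apply cp_id | apply cp_opp | apply cp_plus | apply cp_minus | apply cp_mult ].

Lemma WT_eq e t y : e * e = 1 -> 0 < t -> WT e t y = - (LAM e t y * WX e t y).
Proof. intros He Ht. assert (H : WT e t y + LAM e t y * WX e t y = 0) by (eapply transport; eauto). lra. Qed.


Lemma IBP e t a b : 0 <= t ->
  RInt (fun y => - (2 * (LAM e t y * WX e t y) * W e t y)) a b =
  RInt (fun y => LAMX e t y * (W e t y * W e t y)) a b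
   - (LAM e t b * (W e t b * W e t b) - LAM e t a * (W e t a * W e t a)).
Proof.
intros Ht.
set (D := fun y => LAMX e t y * (W e t y * W e t y) + LAM e t y * (WX e t y * W e t y + W e t y * WX e t y)).
assert (HD : RInt D a b = LAM e t b * (W e t b * W e t b) - LAM e t a * (W e t a * W e t a)).
{ apply (RI_deriv (fun y => LAM e t y * (W e t y * W e t y)) D).
  - intros y _. unfold D. eapply isd_eq. apply isd_mult. apply lam_dx; auto.
    apply isd_mult; apply Wv_dx; auto. cbv beta; ring.
  - intros y. unfold D. c1. }
rewrite <- HD.
rewrite <- RI_minus.
- apply RI_ext. intros x _. unfold D. ring.
- apply exR_c. intros; c1.
- apply exR_c. intros; unfold D; c1.
Qed.

Lemma Ep_le a b t sp : 0 < t -> a <= b ->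
  (forall e y, (e = 1 \/ e = -1) -> a <= y <= b -> Rabs (LAMX e t y) <= 1) ->
  LAM 1 t a <= sp -> LAM (-1) t a <= sp -> - sp <= LAM 1 t b -> - sp <= LAM (-1) t b ->
  RInt (fun y => Derive (fun z => PH z y) t) a b + - PH t a * sp + PH t b * (- sp) <= RInt (PH t) a b.
Proof.
intros Ht Hab Hlx H1 H2 H3 H4.
rewrite (RI_ext _ (fun y => - (2 * (LAM 1 t y * WX 1 t y) * W 1 t y) + - (2 * (LAM (-1) t y * WX (-1) t y) * W (-1) t y))).
2:{ intros y _. assert (Hd : is_derive (fun z => PH z y) t (PHT t y)) by (eapply ph_dt; eauto). transitivity (PHT t y). apply is_derive_unique; exact Hd.
  unfold pht. rewrite !WT_eq by lra. ring. }
rewrite RI_plus by (apply exR_c; intros; c1).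
rewrite !IBP by lra.
assert (HP : RInt (PH t) a b = RInt (fun y => W 1 t y * W 1 t y) a b + RInt (fun y => W (-1) t y * W (-1) t y) a b).
{ unfold ph. rewrite RI_plus; auto; apply exR_c; intros; c1. }
rewrite HP.
assert (I1 : RInt (fun y => LAMX 1 t y * (W 1 t y * W 1 t y)) a b <= RInt (fun y => W 1 t y * W 1 t y) a b).
{ apply RInt_le; auto; try (apply exR_c; intros; c1).
  intros y Hy. assert (Hl := Hlx 1 y (or_introl eq_refl) ltac:(lra)). apply Rabs_le_between in Hl.
  assert (0 <= W 1 t y * W 1 t y) by nra. nra. }
assert (I2 : RInt (fun y => LAMX (-1) t y * (W (-1) t y * W (-1) t y)) a b <= RInt (fun y => W (-1) t y * W (-1) t y) a b).
{ apply RInt_le; auto; try (apply exR_c; intros; c1).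
  intros y Hy. assert (Hl := Hlx (-1) y (or_intror eq_refl) ltac:(lra)). apply Rabs_le_between in Hl.
  assert (0 <= W (-1) t y * W (-1) t y) by nra. nra. }
unfold ph.
assert (0 <= W 1 t a * W 1 t a) by nra. assert (0 <= W (-1) t a * W (-1) t a) by nra.
assert (0 <= W 1 t b * W 1 t b) by nra. assert (0 <= W (-1) t b * W (-1) t b) by nra.
assert ((LAM 1 t a - sp) * (W 1 t a * W 1 t a) <= 0) by nra.
assert ((LAM (-1) t a - sp) * (W (-1) t a * W (-1) t a) <= 0) by nra.
assert ((LAM 1 t b + sp) * (W 1 t b * W 1 t b) >= 0) by nra.
assert ((LAM (-1) t b + sp) * (W (-1) t b * W (-1) t b) >= 0) by nra.
lra.
Qed.

End Sol.

Lemma int_zero_pos (f : R -> R) a b y : (forall z, continuity_pt f z) ->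
  (forall z, a <= z <= b -> 0 <= f z) -> RInt f a b = 0 -> a < y < b -> f y = 0.
Proof.
intros Hc Hp H0 Hy.
destruct (Rle_lt_or_eq_dec 0 (f y) (Hp y ltac:(lra))) as [Hlt|Heq]; [|auto].
exfalso.
destruct (proj1 (continuity_pt_locally f y) (Hc y) (mkposreal (f y / 2) ltac:(lra))) as [d Hd].
simpl in Hd.
set (d' := Rmin (d / 2) (Rmin (y - a) (b - y) / 2)).
assert (Hd'0 : 0 < d').
{ unfold d'. apply Rmin_pos. destruct d; simpl; lra. assert (0 < Rmin (y - a) (b - y)) by (apply Rmin_pos; lra). lra. }
assert (Hd'1 : d' <= d / 2) by apply Rmin_l.
assert (Hd'2 : d' <= Rmin (y - a) (b - y) / 2) by apply Rmin_r.
assert (Hm1 : Rmin (y - a) (b - y) <= y - a) by apply Rmin_l.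
assert (Hm2 : Rmin (y - a) (b - y) <= b - y) by apply Rmin_r.
assert (E1 : ex_RInt f a (y - d')) by (apply exR_c; auto).
assert (E2 : ex_RInt f (y - d') (y + d')) by (apply exR_c; auto).
assert (E3 : ex_RInt f (y + d') b) by (apply exR_c; auto).
rewrite <- (RI_Chasles f a (y - d') b) in H0; auto.
2: apply exR_c; auto.
rewrite <- (RI_Chasles f (y - d') (y + d') b) in H0; auto.
assert (I1 : 0 <= RInt f a (y - d')) by (apply RInt_ge_0; auto; try lra; intros; apply Hp; lra).
assert (I3 : 0 <= RInt f (y + d') b) by (apply RInt_ge_0; auto; try lra; intros; apply Hp; lra).
assert (I2 : RInt (fun _ => f y / 2) (y - d') (y + d') <= RInt f (y - d') (y + d')).
{ apply RInt_le; auto; try lra. apply exR_c; intros; apply cp_const.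
  intros z Hz. assert (Rabs (z - y) < d). { apply Rabs_def1; lra. }
  specialize (Hd z H). apply Rabs_def2 in Hd. lra. }
rewrite RI_const in I2.
assert (0 < (y + d' - (y - d')) * (f y / 2)) by (apply Rmult_lt_0_compat; lra).
lra.
Qed.

Lemma gronwall (E E' : R -> R) t0 t1 :
  (forall t, t0 < t < t1 -> is_derive E t (E' t)) ->
  (forall t, t0 < t < t1 -> E' t <= E t) ->
  (forall eta, 0 < eta -> exists d, 0 < d /\ forall t, t0 < t < t0 + d -> E t <= eta) ->
  forall t, t0 < t < t1 -> E t <= 0.
Proof.
intros HD HL HS t Ht.
set (F := fun z => E z * exp (- z)).
assert (HF : forall z, t0 < z < t1 -> is_derive F z ((E' z - E z) * exp (- z))).
{ intros z Hz. unfold F. eapply isd_eq. apply isd_mult. apply HD; auto.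
  apply (isd_comp exp (fun z => - z)). apply is_derive_exp.
  eapply isd_eq. apply (is_derive_opp (fun z : R => z)). apply isd_id. reflexivity. simpl. unfold opp; simpl. ring. }
assert (Hmon : forall eta, 0 < eta -> E t * exp (- t) <= eta * exp (- t0)).
{ intros eta Heta. destruct (HS eta Heta) as [d [Hd Hd2]].
  set (t' := t0 + Rmin d (t - t0) / 2).
  assert (Hm1 : Rmin d (t - t0) <= d) by apply Rmin_l.
  assert (Hm2 : Rmin d (t - t0) <= t - t0) by apply Rmin_r.
  assert (Hm0 : 0 < Rmin d (t - t0)) by (apply Rmin_pos; lra).
  assert (Ht' : t0 < t' < t) by (unfold t'; lra).
  destruct (MVT_gen F t' t (fun z => (E' z - E z) * exp (- z))) as [c [Hc Hc2]].
  - intros z Hz. rewrite Rmin_left in Hz by lra. rewrite Rmax_right in Hz by lra. apply HF. lra.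
  - intros z Hz. rewrite Rmin_left in Hz by lra. rewrite Rmax_right in Hz by lra.
    apply continuity_pt_filterlim. apply (ex_derive_continuous F). eexists. apply HF. lra.
  - rewrite Rmin_left in Hc by lra. rewrite Rmax_right in Hc by lra.
    assert ((E' c - E c) * exp (- c) <= 0).
    { assert (E' c <= E c) by (apply HL; lra). assert (0 < exp (- c)) by apply exp_pos. nra. }
    assert (F t <= F t') by nra.
    assert (E t' <= eta) by (apply Hd2; unfold t'; lra).
    assert (exp (- t') < exp (- t0)) by (apply exp_increasing; lra).
    assert (0 < exp (- t')) by apply exp_pos.
    unfold F in *. nra. }
destruct (Rle_or_lt (E t) 0) as [H|H]; auto.
exfalso.
assert (He0 : 0 < exp (- t)) by apply exp_pos.
assert (He1 : 0 < exp (- t0)) by apply exp_pos.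
set (eta := E t * exp (- t) / (2 * exp (- t0))).
assert (0 < eta) by (unfold eta; apply Rdiv_lt_0_compat; nra).
specialize (Hmon eta H0). unfold eta in Hmon.
replace (E t * exp (- t) / (2 * exp (- t0)) * exp (- t0)) with (E t * exp (- t) / 2) in Hmon by (field; lra).
nra.
Qed.

Lemma unif_near (F : R -> R -> R) A B T eps :
  (forall t x, continuity_2d_pt (fun s y => F (Rmax 0 s) y) t x) -> 0 < eps ->
  exists d, 0 < d /\ forall tau t x, 0 <= tau <= T -> 0 <= t <= T -> A <= x <= B ->
    Rabs (t - tau) < d -> Rabs (F t x - F tau x) < eps.
Proof.
intros HF He.
destruct (uniform_continuity_2d (fun s y => F (Rmax 0 s) y) 0 T A B) with (eps := mkposreal eps He) as [d Hd].
{ intros; apply HF. }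
exists d. split. apply cond_pos.
intros tau t x H1 H2 H3 H4.
specialize (Hd tau x t x H1 H3 H2 H3 H4). simpl in Hd.
rewrite (Rmax_right 0 t), (Rmax_right 0 tau) in Hd by lra.
apply Hd. rewrite Rminus_eq_0, Rabs_R0. apply cond_pos.
Qed.

Lemma lim_left (f : R -> R -> R) tau tau' x c : 0 <= tau' < tau ->
  continuity_2d_pt (fun s y => f (Rmax 0 s) y) tau x ->
  (forall s, tau' < s < tau -> f s x = c) -> f tau x = c.
Proof.
intros Ht Hc Hs.
destruct (Req_dec (f tau x) c) as [E|E]; auto. exfalso.
assert (Hp : 0 < Rabs (f tau x - c)) by (apply Rabs_pos_lt; lra).
destruct (Hc (mkposreal _ Hp)) as [d Hd]. simpl in Hd.
set (s := tau - Rmin d (tau - tau') / 2).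
assert (Hm1 : Rmin d (tau - tau') <= d) by apply Rmin_l.
assert (Hm2 : Rmin d (tau - tau') <= tau - tau') by apply Rmin_r.
assert (Hm0 : 0 < Rmin d (tau - tau')) by (apply Rmin_pos; [apply cond_pos|lra]).
specialize (Hd s x). rewrite (Rmax_right 0 s), (Rmax_right 0 tau) in Hd by (unfold s; lra).
rewrite (Hs s) in Hd by (unfold s; lra).
assert (Rabs (c - f tau x) < Rabs (f tau x - c)).
{ apply Hd. unfold s. rewrite Rabs_left by lra. lra. rewrite Rminus_eq_0, Rabs_R0. apply cond_pos. }
rewrite Rabs_minus_sym in H. lra.
Qed.
Section Sol.
Variables (K gamma rhobar : R) (rho u rt ut : R -> R -> R).
Hypothesis HK : 0 < K.
Hypothesis Hg : 2 <= gamma.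
Hypothesis Hrb : 0 < rhobar.
Hypothesis Hr_dx : forall t x, 0 <= t -> ex_derive (fun y => rho t y) x.
Hypothesis Hr_dt : forall t x, 0 < t -> ex_derive (fun s => rho s x) t.
Hypothesis Hr_c : forall t x, 0 <= t -> cont_half rho t x.
Hypothesis Hr_dxc : forall t x, 0 <= t -> cont_half (dx rho) t x.
Hypothesis Hrt_eq : forall t x, 0 < t -> rt t x = dt rho t x.
Hypothesis Hrt_c : forall t x, 0 <= t -> cont_half rt t x.
Hypothesis Hu_dx : forall t x, 0 <= t -> ex_derive (fun y => u t y) x.
Hypothesis Hu_dt : forall t x, 0 < t -> ex_derive (fun s => u s x) t.
Hypothesis Hu_c : forall t x, 0 <= t -> cont_half u t x.
Hypothesis Hu_dxc : forall t x, 0 <= t -> cont_half (dx u) t x.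
Hypothesis Hut_eq : forall t x, 0 < t -> ut t x = dt u t x.
Hypothesis Hut_c : forall t x, 0 <= t -> cont_half ut t x.
Hypothesis Hpos : forall t x, 0 <= t -> 0 < rho t x.
Hypothesis Hmass : forall t x, 0 < t ->
     dt rho t x + Derive (fun y => rho t y * u t y) x = 0.
Hypothesis Hmom : forall t x, 0 < t ->
     rho t x * (dt u t x + u t x * dx u t x)
     + Derive (fun y => K * Rpower (rho t y) gamma) x = 0.

Local Notation W := (Wv K gamma rhobar rho u).
Local Notation WT := (Wt K gamma rho rt ut).
Local Notation WX := (Wx K gamma rho u).
Local Notation LAM := (lam K gamma rho u).
Local Notation LAMX := (lamx K gamma rho u).

Local Notation PH := (ph K gamma rhobar rho u).

Lemma dx_const (f : R -> R -> R) tau y c a b : a < y < b -> (forall z, a < z < b -> f tau z = c) -> dx f tau y = 0.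
Proof.
intros Hy Hf. unfold dx. rewrite (Derive_ext_loc _ (fun _ => c)). apply Derive_const.
assert (Hm : 0 < Rmin (y - a) (b - y)) by (apply Rmin_pos; lra).
exists (mkposreal _ Hm). intros z Hz. change (Rabs (z - y) < Rmin (y - a) (b - y)) in Hz.
assert (Rmin (y - a) (b - y) <= y - a) by apply Rmin_l. assert (Rmin (y - a) (b - y) <= b - y) by apply Rmin_r.
apply Rabs_def2 in Hz. apply Hf. lra.
Qed.

Lemma const_vals tau a b y e : a < y < b ->
  (forall z, a < z < b -> rho tau z = rhobar /\ u tau z = 0) ->
  W e tau y = 0 /\ LAM e tau y = e * cs K gamma rhobar /\ LAMX e tau y = 0 /\ PH tau y = 0.
Proof.
intros Hy Hc. destruct (Hc y Hy) as [H1 H2].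
assert (Hx1 : dx rho tau y = 0) by (apply (dx_const rho tau y rhobar a b); auto; intros; apply Hc; auto).
assert (Hx2 : dx u tau y = 0) by (apply (dx_const u tau y 0 a b); auto; intros; apply Hc; auto).
unfold ph, Wv, lam, lamx. rewrite H1, H2, Hx1, Hx2. repeat split; ring.
Qed.

Lemma ph_nonneg t y : 0 <= PH t y.
Proof. unfold ph. nra. Qed.

Lemma state_from_ph t y : 0 <= t -> PH t y = 0 -> rho t y = rhobar /\ u t y = 0.
Proof.
intros Ht H. unfold ph in H.
assert (H1 : W 1 t y = 0) by nra. assert (H2 : W (-1) t y = 0) by nra.
unfold Wv in H1, H2.
assert (Hu : u t y = 0) by lra. split; auto.
apply (gg_inj K gamma); auto. lra.
Qed.

Definition Pp a0 b0 sp tau := forall t x, 0 <= t <= tau -> a0 + sp * t < x < b0 - sp * t ->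
  rho t x = rhobar /\ u t x = 0.

Lemma Clo a0 b0 sp tau : 0 < sp -> 0 < tau -> (forall t, 0 <= t < tau -> Pp a0 b0 sp t) -> Pp a0 b0 sp tau.
Proof.
intros Hsp Ht HP t x Ht2 Hx.
destruct (Rle_lt_or_eq_dec t tau (proj2 Ht2)) as [Hl|He].
- apply (HP t); auto. lra. lra.
- subst t. split.
  + apply (lim_left rho tau 0 x rhobar). lra. apply c_rho; auto.
    intros s Hs. apply (HP s); [lra|lra|]. nra.
  + apply (lim_left u tau 0 x 0). lra. apply c_u; auto.
    intros s Hs. apply (HP s); [lra|lra|]. nra.
Qed.

Lemma Ext a0 b0 sp tau : cs K gamma rhobar < sp -> a0 < b0 -> 0 <= tau -> tau < (b0 - a0) / (2 * sp) ->
  Pp a0 b0 sp tau -> exists d, 0 < d /\ Pp a0 b0 sp (tau + d).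
Proof.
intros Hsp Hab Ht0 HtT HP.
assert (Hsig : 0 < cs K gamma rhobar) by (apply cs_pos; auto).
assert (Hsp0 : 0 < sp) by lra.
set (T := (b0 - a0) / (2 * sp)) in *.
assert (HT : b0 - a0 = 2 * sp * T) by (unfold T; field; lra).
set (eps0 := Rmin 1 (sp - cs K gamma rhobar)).
assert (He0 : 0 < eps0) by (apply Rmin_pos; lra).
assert (He1 : eps0 <= 1) by apply Rmin_l. assert (He2 : eps0 <= sp - cs K gamma rhobar) by apply Rmin_r.
destruct (unif_near (LAM 1) a0 b0 T eps0) as [d1 [Hd1 U1]]; auto. intros; apply c2_LAM; auto.
destruct (unif_near (LAM (-1)) a0 b0 T eps0) as [d2 [Hd2 U2]]; auto. intros; apply c2_LAM; auto.
destruct (unif_near (LAMX 1) a0 b0 T eps0) as [d3 [Hd3 U3]]; auto. intros; apply c2_LAMX; auto.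
destruct (unif_near (LAMX (-1)) a0 b0 T eps0) as [d4 [Hd4 U4]]; auto. intros; apply c2_LAMX; auto.
set (d := Rmin (Rmin d1 d2) (Rmin (Rmin d3 d4) (T - tau))).
assert (Hd : 0 < d) by (unfold d; repeat apply Rmin_pos; lra).
assert (Hdd1 : d <= d1) by (unfold d; repeat (eapply Rle_trans; [apply Rmin_l|]); lra).
assert (Hdd2 : d <= d2) by (unfold d; eapply Rle_trans; [apply Rmin_l|]; apply Rmin_r).
assert (Hdd3 : d <= d3) by (unfold d; eapply Rle_trans; [apply Rmin_r|]; eapply Rle_trans; [apply Rmin_l|]; apply Rmin_l).
assert (Hdd4 : d <= d4) by (unfold d; eapply Rle_trans; [apply Rmin_r|]; eapply Rle_trans; [apply Rmin_l|]; apply Rmin_r).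
assert (HdT : d <= T - tau) by (unfold d; eapply Rle_trans; [apply Rmin_r|]; apply Rmin_r).
assert (Hc : forall z, a0 + sp * tau < z < b0 - sp * tau -> rho tau z = rhobar /\ u tau z = 0).
{ intros z Hz. apply (HP tau z); auto. lra. }
assert (Hin : forall t y, tau < t -> a0 + sp * t <= y <= b0 - sp * t -> a0 + sp * tau < y < b0 - sp * tau).
{ intros t y Htt Hy. split; nra. }
set (E := fun t => RInt (PH t) (a0 + sp * t) (b0 - sp * t)).
set (E' := fun t => RInt (fun y => Derive (fun z => PH z y) t) (a0 + sp * t) (b0 - sp * t)
    + - PH t (a0 + sp * t) * sp + PH t (b0 - sp * t) * (- sp)).
assert (Hg0 : forall t, tau < t < tau + d -> E t <= 0).
{ apply (gronwall E E' tau (tau + d)).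
  - intros t Ht. unfold E, E'. eapply E_deriv; eauto. lra.
  - intros t Ht. unfold E, E'. eapply Ep_le; eauto. lra. nra.
    + intros e y He Hy.
      assert (Hy' := Hin t y ltac:(lra) Hy).
      destruct (const_vals tau _ _ y e Hy' Hc) as [_ [_ [HX _]]].
      destruct He as [-> | ->].
      * assert (Hu := U3 tau t y ltac:(lra) ltac:(lra) ltac:(nra) ltac:(rewrite Rabs_right; lra)).
        rewrite HX in Hu. rewrite Rminus_0_r in Hu. lra.
      * assert (Hu := U4 tau t y ltac:(lra) ltac:(lra) ltac:(nra) ltac:(rewrite Rabs_right; lra)).
        rewrite HX in Hu. rewrite Rminus_0_r in Hu. lra.
    + assert (Hy' := Hin t (a0 + sp * t) ltac:(lra) ltac:(nra)).
      destruct (const_vals tau _ _ _ 1 Hy' Hc) as [_ [HL _]].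
      assert (Hu := U1 tau t (a0 + sp * t) ltac:(lra) ltac:(lra) ltac:(nra) ltac:(rewrite Rabs_right; lra)).
      rewrite HL in Hu. apply Rabs_def2 in Hu. lra.
    + assert (Hy' := Hin t (a0 + sp * t) ltac:(lra) ltac:(nra)).
      destruct (const_vals tau _ _ _ (-1) Hy' Hc) as [_ [HL _]].
      assert (Hu := U2 tau t (a0 + sp * t) ltac:(lra) ltac:(lra) ltac:(nra) ltac:(rewrite Rabs_right; lra)).
      rewrite HL in Hu. apply Rabs_def2 in Hu. lra.
    + assert (Hy' := Hin t (b0 - sp * t) ltac:(lra) ltac:(nra)).
      destruct (const_vals tau _ _ _ 1 Hy' Hc) as [_ [HL _]].
      assert (Hu := U1 tau t (b0 - sp * t) ltac:(lra) ltac:(lra) ltac:(nra) ltac:(rewrite Rabs_right; lra)).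
      rewrite HL in Hu. apply Rabs_def2 in Hu. lra.
    + assert (Hy' := Hin t (b0 - sp * t) ltac:(lra) ltac:(nra)).
      destruct (const_vals tau _ _ _ (-1) Hy' Hc) as [_ [HL _]].
      assert (Hu := U2 tau t (b0 - sp * t) ltac:(lra) ltac:(lra) ltac:(nra) ltac:(rewrite Rabs_right; lra)).
      rewrite HL in Hu. apply Rabs_def2 in Hu. lra.
  - intros eta Heta.
    assert (Hq : 0 < eta / (b0 - a0 + 1)) by (apply Rdiv_lt_0_compat; lra).
    destruct (unif_near PH a0 b0 T (eta / (b0 - a0 + 1))) as [d5 [Hd5 U5]]; auto.
    { intros; apply c2_ph; auto. }
    exists (Rmin d5 (T - tau)). split. apply Rmin_pos; lra.
    intros t Ht.
    assert (Hm1 : Rmin d5 (T - tau) <= d5) by apply Rmin_l.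
    assert (Hm2 : Rmin d5 (T - tau) <= T - tau) by apply Rmin_r.
    unfold E.
    apply Rle_trans with (RInt (fun _ => eta / (b0 - a0 + 1)) (a0 + sp * t) (b0 - sp * t)).
    + apply RInt_le. nra. apply exR_ph; auto; lra. apply exR_c; intros; apply cp_const.
      intros y Hy.
      assert (Hy' := Hin t y ltac:(lra) ltac:(lra)).
      destruct (const_vals tau _ _ y 1 Hy' Hc) as [_ [_ [_ HP0]]].
      assert (Hu := U5 tau t y ltac:(lra) ltac:(lra) ltac:(nra) ltac:(rewrite Rabs_right; lra)).
      rewrite HP0 in Hu. rewrite Rminus_0_r in Hu. apply Rabs_def2 in Hu. lra.
    + rewrite RI_const.
      apply Rle_trans with ((b0 - a0 + 1) * (eta / (b0 - a0 + 1))).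
      apply Rmult_le_compat_r; [lra|nra].
      right; field; lra.
}
exists (d / 2). split. lra.
intros t x Ht Hx.
destruct (Rle_or_lt t tau) as [Hle|Hlt].
- apply (HP t x); auto. lra.
- assert (sp * t <= sp * T) by (apply Rmult_le_compat_l; lra).
  assert (HE : E t = 0).
  { apply Rle_antisym. apply Hg0; lra. unfold E. apply RInt_ge_0. lra. apply exR_ph; auto; lra.
    intros; apply ph_nonneg. }
  apply state_from_ph. lra.
  apply (int_zero_pos (PH t) (a0 + sp * t) (b0 - sp * t)); auto.
  + intros; apply cp_ph; auto; lra.
  + intros; apply ph_nonneg.
Qed.

Lemma piece a0 b0 sp : cs K gamma rhobar < sp -> a0 < b0 ->
  (forall x, a0 < x < b0 -> rho 0 x = rhobar /\ u 0 x = 0) ->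
  forall t x, 0 <= t -> a0 + sp * t < x < b0 - sp * t -> rho t x = rhobar /\ u t x = 0.
Proof.
intros Hsp Hab Hi t x Ht Hx.
assert (Hsig : 0 < cs K gamma rhobar) by (apply cs_pos; auto).
assert (Hsp0 : 0 < sp) by lra.
set (T := (b0 - a0) / (2 * sp)) in *.
assert (HT : b0 - a0 = 2 * sp * T) by (unfold T; field; lra).
assert (Hmono : forall t1 t2, t1 <= t2 -> Pp a0 b0 sp t2 -> Pp a0 b0 sp t1).
{ intros t1 t2 H12 H y z Hy Hz. apply H; auto. lra. }
assert (HP0 : Pp a0 b0 sp 0).
{ intros y z Hy Hz. assert (y = 0) by lra. subst y. apply Hi. lra. }
set (S := fun tau => 0 <= tau <= T /\ Pp a0 b0 sp tau).
assert (Hb : bound S) by (exists T; intros y [Hy _]; lra).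
assert (Hne : exists y, S y) by (exists 0; split; auto; split; nra).
destruct (completeness S Hb Hne) as [m [Hm1 Hm2]].
assert (Hm0 : 0 <= m) by (apply Hm1; split; auto; split; nra).
assert (HmT : m <= T) by (apply Hm2; intros y [Hy _]; lra).
assert (Hbelow : forall t', 0 <= t' < m -> Pp a0 b0 sp t').
{ intros t' Ht'. destruct (Rle_or_lt m t') as [Hc|Hc]. lra.
  destruct (classic (exists tau, S tau /\ t' < tau)) as [[tau [[_ Hs] Hl]]|Hn].
  - apply (Hmono t' tau); auto. lra.
  - exfalso. assert (m <= t'). { apply Hm2. intros y Hy. destruct (Rle_or_lt y t'); auto. exfalso. apply Hn. exists y; auto. }
    lra. }
assert (HPm : Pp a0 b0 sp m).
{ destruct (Rle_lt_or_eq_dec 0 m Hm0) as [Hpos'|Heq].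
  - apply Clo; auto.
  - subst m. auto. }
assert (Htx : t < T) by nra.
destruct (Rle_or_lt t m) as [Htm|Htm].
- apply (HPm t x); auto.
- exfalso.
  destruct (Ext a0 b0 sp m Hsp Hab Hm0 ltac:(fold T; lra) HPm) as [d [Hd HPd]].
  assert (S (m + Rmin d (T - m))).
  { assert (Rmin d (T - m) <= d) by apply Rmin_l. assert (Rmin d (T - m) <= T - m) by apply Rmin_r.
    assert (0 < Rmin d (T - m)) by (apply Rmin_pos; lra).
    split. split; lra. apply (Hmono _ (m + d)); auto. lra. }
  assert (m + Rmin d (T - m) <= m) by (apply Hm1; auto).
  assert (0 < Rmin d (T - m)) by (apply Rmin_pos; lra). lra.
Qed.

End Sol.

Section Sol.
Variables (K gamma rhobar : R) (rho u rt ut : R -> R -> R).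
Hypothesis HK : 0 < K.
Hypothesis Hg : 2 <= gamma.
Hypothesis Hrb : 0 < rhobar.
Hypothesis Hr_dx : forall t x, 0 <= t -> ex_derive (fun y => rho t y) x.
Hypothesis Hr_dt : forall t x, 0 < t -> ex_derive (fun s => rho s x) t.
Hypothesis Hr_c : forall t x, 0 <= t -> cont_half rho t x.
Hypothesis Hr_dxc : forall t x, 0 <= t -> cont_half (dx rho) t x.
Hypothesis Hrt_eq : forall t x, 0 < t -> rt t x = dt rho t x.
Hypothesis Hrt_c : forall t x, 0 <= t -> cont_half rt t x.
Hypothesis Hu_dx : forall t x, 0 <= t -> ex_derive (fun y => u t y) x.
Hypothesis Hu_dt : forall t x, 0 < t -> ex_derive (fun s => u s x) t.
Hypothesis Hu_c : forall t x, 0 <= t -> cont_half u t x.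
Hypothesis Hu_dxc : forall t x, 0 <= t -> cont_half (dx u) t x.
Hypothesis Hut_eq : forall t x, 0 < t -> ut t x = dt u t x.
Hypothesis Hut_c : forall t x, 0 <= t -> cont_half ut t x.
Hypothesis Hpos : forall t x, 0 <= t -> 0 < rho t x.
Hypothesis Hmass : forall t x, 0 < t ->
     dt rho t x + Derive (fun y => rho t y * u t y) x = 0.
Hypothesis Hmom : forall t x, 0 < t ->
     rho t x * (dt u t x + u t x * dx u t x)
     + Derive (fun y => K * Rpower (rho t y) gamma) x = 0.

Local Notation W := (Wv K gamma rhobar rho u).
Local Notation WT := (Wt K gamma rho rt ut).
Local Notation WX := (Wx K gamma rho u).
Local Notation LAM := (lam K gamma rho u).
Local Notation LAMX := (lamx K gamma rho u).

Variable Rad : R.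
Hypothesis HR : 0 < Rad.
Hypothesis Hinit : forall x, Rad < Rabs x -> rho 0 x = rhobar /\ u 0 x = 0.

Lemma fps t x : 0 <= t -> Rad + cs K gamma rhobar * t < Rabs x -> rho t x = rhobar /\ u t x = 0.
Proof.
intros Ht Hx.
assert (Hsig : 0 < cs K gamma rhobar) by (apply cs_pos; auto).
set (sig := cs K gamma rhobar) in *.
set (q := (Rabs x - Rad - sig * t) / (2 * (t + 1))).
assert (Hq : 0 < q) by (unfold q; apply Rdiv_lt_0_compat; lra).
assert (Hqt : q * t < Rabs x - Rad - sig * t).
{ unfold q. apply Rmult_lt_reg_r with (2 * (t + 1)). lra.
  replace ((Rabs x - Rad - sig * t) / (2 * (t + 1)) * t * (2 * (t + 1))) with ((Rabs x - Rad - sig * t) * t) by (field; lra).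
  nra. }
set (sp := sig + q).
assert (Hspt : sp * t = sig * t + q * t) by (unfold sp; ring).
assert (Hsp0 : 0 <= sp * t) by (apply Rmult_le_pos; unfold sp; lra).
assert (Hst : 0 <= sig * t) by (apply Rmult_le_pos; lra).
destruct (Rle_or_lt 0 x) as [Hx0|Hx0].
- rewrite Rabs_right in Hqt, Hx by lra.
  eapply (piece K gamma rhobar rho u rt ut) with (a0 := Rad) (b0 := x + sp * t + 1) (sp := sp); eauto.
  + unfold sp, sig; lra.
  + lra.
  + intros z Hz. apply Hinit. rewrite Rabs_right; lra.
  + split; lra.
- rewrite Rabs_left in Hqt, Hx by lra.
  eapply (piece K gamma rhobar rho u rt ut) with (a0 := - (- x + sp * t + 1)) (b0 := - Rad) (sp := sp); eauto.
  + unfold sp, sig; lra.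
  + lra.
  + intros z Hz. apply Hinit. rewrite Rabs_left; lra.
  + split; lra.
Qed.

End Sol.

Lemma RIgen (f : R -> R) L0 : 0 < L0 -> (forall y, continuity_pt f y) ->
  (forall y, L0 < Rabs y -> f y = 0) ->
  RInt_gen f (Rbar_locally m_infty) (Rbar_locally p_infty) = RInt f (- L0) L0.
Proof.
intros HL Hc Hz.
apply (is_RInt_gen_unique (V := R_CompleteNormedModule)).
apply (proj2 (filterlimi_locally _ _)).
intros eps.
apply Filter_prod with (Q := fun a => a < - L0) (R := fun b => L0 < b).
- exists (- L0). auto.
- exists L0. auto.
- intros a b Ha Hb. exists (RInt f a b). split.
  + apply (RInt_correct (V := R_CompleteNormedModule)). apply exR_c; auto.
  + replace (RInt f a b) with (RInt f (- L0) L0). apply ball_center.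
    rewrite <- (RI_Chasles f a (- L0) b) by (apply exR_c; auto).
    rewrite <- (RI_Chasles f (- L0) L0 b) by (apply exR_c; auto).
    rewrite (RI_zero f a (- L0)).
    rewrite (RI_zero f L0 b). rewrite Rplus_0_l, Rplus_0_r; reflexivity.
    * intros x Hx. rewrite Rmin_left in Hx by lra. rewrite Rmax_right in Hx by lra. apply Hz. rewrite Rabs_right; lra.
    * intros x Hx. rewrite Rmin_left in Hx by lra. rewrite Rmax_right in Hx by lra. apply Hz. rewrite Rabs_left; lra.
Qed.

Lemma mono_up (F F' : R -> R) t0 t1 a b : (forall t, t0 < t < t1 -> is_derive F t (F' t)) ->
  (forall t, t0 < t < t1 -> 0 <= F' t) -> t0 < a -> a <= b -> b < t1 -> F a <= F b.
Proof.
intros HD HP Ha Hab Hb. destruct (Req_dec a b) as [->|Hne]; [lra|].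
destruct (MVT_gen F a b F') as [c [Hc Hc2]].
- intros x Hx. rewrite Rmin_left in Hx by lra. rewrite Rmax_right in Hx by lra. apply HD; lra.
- intros x Hx. rewrite Rmin_left in Hx by lra. rewrite Rmax_right in Hx by lra.
  apply continuity_pt_filterlim. apply (ex_derive_continuous F). eexists. apply HD; lra.
- rewrite Rmin_left in Hc by lra. rewrite Rmax_right in Hc by lra.
  assert (0 <= F' c) by (apply HP; lra). nra.
Qed.

Lemma hh_d2 K gamma c : 0 < K -> 2 <= gamma -> 0 < c -> cs K gamma c * cs K gamma c / c = kg K gamma * Rpower c (gamma - 2).
Proof. intros HK Hg Hc. rewrite cs_sq by auto. replace (gamma - 2) with (gamma - 1 - 1) by ring. rewrite (Rpower_m1 c (gamma - 1)) by auto. field; lra. Qed.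

Lemma hh_convex K gamma r rb : 0 < K -> 2 <= gamma -> 0 < r -> 0 < rb ->
  cs K gamma rb * cs K gamma rb / rb * (r - rb) <= hh K gamma r - hh K gamma rb.
Proof.
intros HK Hg Hr Hrb. destruct (Req_dec r rb) as [->|Hne]; [lra|].
assert (Hkg : 0 < kg K gamma) by (apply kg_pos; auto).
destruct (MVT_gen (hh K gamma) rb r (fun c => cs K gamma c * cs K gamma c / c)) as [c [Hc Hc2]].
- intros x Hx. apply hh_deriv; auto. assert (Rmin rb r > 0) by (apply Rmin_pos; lra). lra.
- intros x Hx. assert (Rmin rb r > 0) by (apply Rmin_pos; lra).
  apply continuity_pt_filterlim. apply (ex_derive_continuous (hh K gamma)). eexists. apply hh_deriv; auto. lra.
- assert (Hm : Rmin rb r > 0) by (apply Rmin_pos; lra).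
  assert (Hc0 : 0 < c) by lra.
  rewrite Hc2. rewrite !hh_d2 by auto.
  destruct (Rlt_or_le r rb) as [Hl|Hl].
  + rewrite Rmin_right in Hc by lra. rewrite Rmax_left in Hc by lra.
    assert (Rpower c (gamma - 2) <= Rpower rb (gamma - 2)) by (apply Rle_Rpower_l; lra).
    assert (kg K gamma * Rpower c (gamma - 2) <= kg K gamma * Rpower rb (gamma - 2)) by (apply Rmult_le_compat_l; lra).
    nra.
  + rewrite Rmin_left in Hc by lra. rewrite Rmax_right in Hc by lra.
    assert (Rpower rb (gamma - 2) <= Rpower c (gamma - 2)) by (apply Rle_Rpower_l; lra).
    assert (kg K gamma * Rpower rb (gamma - 2) <= kg K gamma * Rpower c (gamma - 2)) by (apply Rmult_le_compat_l; lra).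
    nra.
Qed.

Lemma RI_shrink (f : R -> R) a L : 0 < a <= L -> (forall y, continuity_pt f y) ->
  (forall y, a < Rabs y -> f y = 0) -> RInt f (- L) L = RInt f (- a) a.
Proof.
intros Ha Hc Hz.
rewrite <- (RI_Chasles f (- L) (- a) L) by (apply exR_c; auto).
rewrite <- (RI_Chasles f (- a) a L) by (apply exR_c; auto).
rewrite (RI_zero f (- L) (- a)). rewrite (RI_zero f a L). rewrite Rplus_0_l, Rplus_0_r; reflexivity.
- intros x Hx. destruct (Req_dec a L) as [E|E].
  + subst. rewrite Rmin_left, Rmax_left in Hx; lra.
  + rewrite Rmin_left in Hx by lra. rewrite Rmax_right in Hx by lra. apply Hz. rewrite Rabs_right; lra.
- intros x Hx. destruct (Req_dec a L) as [E|E].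
  + subst. rewrite Rmin_left, Rmax_left in Hx; lra.
  + rewrite Rmin_left in Hx by lra. rewrite Rmax_right in Hx by lra. apply Hz. rewrite Rabs_left; lra.
Qed.

Lemma CS (g : R -> R) a L : 0 < a <= L -> (forall y, continuity_pt g y) ->
  (forall y, a < Rabs y -> g y = 0) ->
  (RInt (fun y => y * g y) (- L) L) ^ 2 <= 2 * a ^ 3 / 3 * RInt (fun y => g y * g y) (- L) L.
Proof.
intros Ha Hc Hz.
assert (C1 : forall y, continuity_pt (fun y => y * g y) y) by (intros; apply cp_mult; auto; apply cp_id).
assert (C2 : forall y, continuity_pt (fun y => g y * g y) y) by (intros; apply cp_mult; auto).
assert (C3 : forall y, continuity_pt (fun y => y * y) y) by (intros; apply cp_mult; apply cp_id).
rewrite (RI_shrink (fun y => y * g y) a L); auto. 2: intros; rewrite Hz; auto; ring.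
rewrite (RI_shrink (fun y => g y * g y) a L); auto. 2: intros; rewrite Hz; auto; ring.
set (H := RInt (fun y => y * g y) (- a) a).
set (Q := RInt (fun y => g y * g y) (- a) a).
assert (HA : RInt (fun y => y * y) (- a) a = 2 * a ^ 3 / 3).
{ rewrite (RI_deriv (fun y => / 3 * (y * y * y))). match goal with |- @eq _ ?a ?b => change (@eq R a b) end. field.
  intros y _. eapply isd_eq. apply (isd_scal (fun y => y * y * y) (/ 3)). apply isd_mult. apply isd_mult; apply isd_id.
  apply isd_id. simpl. field. auto. }
assert (HApos : 0 < 2 * a ^ 3 / 3) by (apply Rdiv_lt_0_compat; [apply Rmult_lt_0_compat; [lra|apply pow_lt; lra]|lra]).
set (lam := H / (2 * a ^ 3 / 3)).
assert (Hnn : 0 <= RInt (fun y => (g y - lam * y) * (g y - lam * y)) (- a) a).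
{ apply RInt_ge_0. lra. apply exR_c; intros; apply cp_mult; apply cp_minus; auto; apply cp_mult; try apply cp_const; apply cp_id.
  intros; apply Rle_0_sqr. }
rewrite (RI_ext _ (fun y => g y * g y - (2 * lam * (y * g y) - lam * lam * (y * y)))) in Hnn.
2: intros; ring.
rewrite RI_minus in Hnn. 2: apply exR_c; auto.
2: apply exR_c; intros; apply cp_minus; apply cp_mult; auto; apply cp_const.
rewrite RI_minus in Hnn. 2: apply exR_c; intros; apply cp_mult; auto; apply cp_const.
2: apply exR_c; intros; apply cp_mult; auto; apply cp_const.
rewrite !RI_scal in Hnn by (apply exR_c; auto).
fold H Q in Hnn. rewrite HA in Hnn. unfold lam in Hnn.
assert (Hnn' : 0 <= Q * (2 * a ^ 3 / 3) - H * H).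
{ replace (Q * (2 * a ^ 3 / 3) - H * H) with ((Q - (2 * (H / (2 * a ^ 3 / 3)) * H - H / (2 * a ^ 3 / 3) * (H / (2 * a ^ 3 / 3)) * (2 * a ^ 3 / 3))) * (2 * a ^ 3 / 3)) by (field; lra).
  apply Rmult_le_pos; lra. }
simpl. nra.
Qed.

Lemma RInt_cont0 (f : R -> R -> R) L : 0 < L ->
  (forall t x, continuity_2d_pt (fun s y => f (Rmax 0 s) y) t x) ->
  forall eps, 0 < eps -> exists d, 0 < d /\ forall t, 0 <= t < d ->
    Rabs (RInt (f t) (- L) L - RInt (f 0) (- L) L) <= eps.
Proof.
intros HL HF eps He.
assert (He' : 0 < eps / (2 * L + 1)) by (apply Rdiv_lt_0_compat; lra).
destruct (unif_near f (- L) L 1 (eps / (2 * L + 1)) HF He') as [d [Hd U]].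
exists (Rmin d 1). split. apply Rmin_pos; lra.
intros t Ht.
assert (Rmin d 1 <= d) by apply Rmin_l. assert (Rmin d 1 <= 1) by apply Rmin_r.
assert (Cf : forall s, 0 <= s -> forall y, continuity_pt (f s) y).
{ intros s Hs y. apply (c2d_x f); auto. }
rewrite <- RI_minus by (apply exR_c; apply Cf; lra).
apply Rle_trans with ((L - - L) * (eps / (2 * L + 1))).
- apply abs_RInt_le_const. lra.
  apply exR_c. intros; apply cp_minus; apply Cf; lra.
  intros y Hy. left. apply (U 0 t y); try lra. rewrite Rminus_0_r, Rabs_right; lra.
- apply Rle_trans with ((2 * L + 1) * (eps / (2 * L + 1))).
  apply Rmult_le_compat_r; lra. right; field; lra.
Qed.

Section Sol.
Variables (K gamma rhobar : R) (rho u rt ut : R -> R -> R).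
Hypothesis HK : 0 < K.
Hypothesis Hg : 2 <= gamma.
Hypothesis Hrb : 0 < rhobar.
Hypothesis Hr_dx : forall t x, 0 <= t -> ex_derive (fun y => rho t y) x.
Hypothesis Hr_dt : forall t x, 0 < t -> ex_derive (fun s => rho s x) t.
Hypothesis Hr_c : forall t x, 0 <= t -> cont_half rho t x.
Hypothesis Hr_dxc : forall t x, 0 <= t -> cont_half (dx rho) t x.
Hypothesis Hrt_eq : forall t x, 0 < t -> rt t x = dt rho t x.
Hypothesis Hrt_c : forall t x, 0 <= t -> cont_half rt t x.
Hypothesis Hu_dx : forall t x, 0 <= t -> ex_derive (fun y => u t y) x.
Hypothesis Hu_dt : forall t x, 0 < t -> ex_derive (fun s => u s x) t.
Hypothesis Hu_c : forall t x, 0 <= t -> cont_half u t x.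
Hypothesis Hu_dxc : forall t x, 0 <= t -> cont_half (dx u) t x.
Hypothesis Hut_eq : forall t x, 0 < t -> ut t x = dt u t x.
Hypothesis Hut_c : forall t x, 0 <= t -> cont_half ut t x.
Hypothesis Hpos : forall t x, 0 <= t -> 0 < rho t x.
Hypothesis Hmass : forall t x, 0 < t ->
     dt rho t x + Derive (fun y => rho t y * u t y) x = 0.
Hypothesis Hmom : forall t x, 0 < t ->
     rho t x * (dt u t x + u t x * dx u t x)
     + Derive (fun y => K * Rpower (rho t y) gamma) x = 0.

Local Notation W := (Wv K gamma rhobar rho u).
Local Notation WT := (Wt K gamma rho rt ut).
Local Notation WX := (Wx K gamma rho u).
Local Notation LAM := (lam K gamma rho u).
Local Notation LAMX := (lamx K gamma rho u).

Variable Rad : R.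
Hypothesis HR : 0 < Rad.
Hypothesis Hinit : forall x, Rad < Rabs x -> rho 0 x = rhobar /\ u 0 x = 0.

Local Notation sig := (cs K gamma rhobar).

Lemma fps' t x : 0 <= t -> Rad + sig * t < Rabs x -> rho t x = rhobar /\ u t x = 0.
Proof. intros; eapply (fps K gamma rhobar rho u rt ut); eauto. Qed.

Lemma cpu t y : 0 <= t -> continuity_pt (fun y => u t y) y.
Proof. intros; apply (c2d_x u); auto; apply c_u; auto. Qed.
Lemma cprho t y : 0 <= t -> continuity_pt (fun y => rho t y) y.
Proof. intros; apply (c2d_x rho); auto; apply c_rho; auto. Qed.
Lemma cphh t y : 0 <= t -> continuity_pt (fun y => hh K gamma (rho t y)) y.
Proof. intros; apply (c2d_x (fun s y => hh K gamma (rho s y))); auto; apply c_hh; auto. Qed.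
Lemma cprt t y : 0 <= t -> continuity_pt (fun y => rt t y) y.
Proof. intros; apply (c2d_x rt); auto; apply c_rt; auto. Qed.
Lemma cput t y : 0 <= t -> continuity_pt (fun y => ut t y) y.
Proof. intros; apply (c2d_x ut); auto; apply c_ut; auto. Qed.
Lemma cpux t y : 0 <= t -> continuity_pt (fun y => dx u t y) y.
Proof. intros; apply (c2d_x (dx u)); auto; apply c_ux; auto. Qed.
Lemma cprx t y : 0 <= t -> continuity_pt (fun y => dx rho t y) y.
Proof. intros; apply (c2d_x (dx rho)); auto; apply c_rx; auto. Qed.
Lemma cpcs t y : 0 <= t -> continuity_pt (fun y => cs K gamma (rho t y)) y.
Proof. intros; apply (c2d_x (fun s y => cs K gamma (rho s y))); auto; apply c_cs; auto. Qed.
Lemma cpinv t y : 0 <= t -> continuity_pt (fun y => / rho t y) y.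
Proof. intros; apply (c2d_x (fun s y => / rho s y)); auto; apply c_inv; auto. Qed.

Ltac c1b := unfold Rdiv; repeat first [ (apply cpu; lra) | (apply cprho; lra) | (apply cphh; lra) | (apply cprt; lra)
  | (apply cput; lra) | (apply cpux; lra) | (apply cprx; lra) | (apply cpcs; lra) | (apply cpinv; lra)
  | apply cp_const | apply cp_id | apply cp_opp | apply cp_plus | apply cp_minus | apply cp_mult ].

Definition HLd L t := RInt (fun y => y * u t y) (- L) L.
Definition MLd L t := RInt (fun y => rho t y - rhobar) (- L) L.
Definition QLd L t := RInt (fun y => u t y * u t y) (- L) L.
Definition PhiLd L t := RInt (fun y => u t y * u t y / 2 + (hh K gamma (rho t y) - hh K gamma rhobar)) (- L) L.

Lemma bnd_zero t L : 0 <= t -> Rad + sig * t < L ->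
  (rho t L = rhobar /\ u t L = 0) /\ (rho t (- L) = rhobar /\ u t (- L) = 0).
Proof.
intros Ht HLd. assert (0 <= sig * t) by (apply Rmult_le_pos; [left; apply cs_pos; auto|lra]).
split; apply fps'; auto; [rewrite Rabs_right | rewrite Rabs_left]; lra.
Qed.

Lemma H_deriv L t : 0 < t -> Rad + sig * t < L -> is_derive (HLd L) t (PhiLd L t).
Proof.
intros Ht HLt.
assert (HD : is_derive (HLd L) t (RInt (fun y => Derive (fun z => y * u z y) t) (- L) L)).
{ unfold HLd. apply (is_derive_RInt_param (fun s y => y * u s y)).
  - apply locally_pos; auto. intros s Hs y _. exists (y * ut s y). apply isd_scal. apply u_dt; auto.
  - intros y _. apply (cont_Dt_loc (fun s y => y * u s y) (fun s y => y * ut s y)); auto.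
    intros s z Hs. apply isd_scal. apply u_dt; auto.
    apply continuity_2d_pt_mult. apply c2d_id2. apply c_ut; auto.
  - apply locally_pos; auto. intros s Hs. apply exR_c. intros; c1b. }
eapply isd_eq; [exact HD|].
rewrite (RI_ext _ (fun y => y * ut t y)).
2: { intros y _. apply is_derive_unique. apply isd_scal. apply u_dt; auto. }
set (Phi := fun y => u t y * u t y / 2 + (hh K gamma (rho t y) - hh K gamma rhobar)).
set (D := fun y => Phi y + y * (u t y * dx u t y + cs K gamma (rho t y) * cs K gamma (rho t y) / rho t y * dx rho t y)).
assert (HDz : RInt D (- L) L = 0).
{ rewrite (RI_deriv (fun y => y * Phi y) D).
  - destruct (bnd_zero t L) as [[H1 H2] [H3 H4]]; try lra. unfold Phi. rewrite H1, H2, H3, H4.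
    match goal with |- @eq _ ?a ?b => change (@eq R a b) end. rewrite Rminus_eq_0, Rmult_0_l, Rdiv_0_l, !Rplus_0_r, !Rmult_0_r, Rminus_0_r. reflexivity.
  - intros y _. unfold D, Phi. eapply isd_eq. apply isd_mult. apply isd_id.
    apply isd_plus. apply (isd_mult (fun y => u t y * u t y) (fun _ => / 2)).
    apply isd_mult; apply u_dx; auto; lra. apply isd_const.
    apply isd_minus. apply (comp_rho_x rho Hr_dx Hpos (hh K gamma) (fun r => cs K gamma r * cs K gamma r / r)). lra.
    intros r Hr. apply hh_deriv; auto. apply isd_const.
    cbv beta. field. apply Rgt_not_eq, Hpos; lra.
  - intros y. unfold D, Phi. c1b. }
unfold PhiLd. fold Phi.
assert (Hm : forall y, y * ut t y = Phi y - D y).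
{ intros y. unfold D. assert (Hmo : rho t y * (ut t y + u t y * dx u t y) + cs K gamma (rho t y) * cs K gamma (rho t y) * dx rho t y = 0) by (eapply mom'; eauto).
  assert (Hr : 0 < rho t y) by (apply Hpos; lra).
  replace (ut t y) with (- (u t y * dx u t y) - cs K gamma (rho t y) * cs K gamma (rho t y) / rho t y * dx rho t y).
  ring. apply (Rmult_eq_reg_l (rho t y)); [|lra]. field_simplify; [|lra]. lra. }
rewrite (RI_ext _ (fun y => Phi y - D y)) by (intros; apply Hm).
rewrite RI_minus. rewrite HDz. match goal with |- @eq _ ?a ?b => change (@eq R a b) end. ring.
apply exR_c; intros; unfold Phi; c1b. apply exR_c; intros; unfold D, Phi; c1b.
Qed.

Lemma M_deriv L t : 0 < t -> Rad + sig * t < L -> is_derive (MLd L) t 0.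
Proof.
intros Ht HLt.
assert (HD : is_derive (MLd L) t (RInt (fun y => Derive (fun z => rho z y - rhobar) t) (- L) L)).
{ unfold MLd. apply (is_derive_RInt_param (fun s y => rho s y - rhobar)).
  - apply locally_pos; auto. intros s Hs y _. exists (rt s y - 0). apply isd_minus. apply r_dt; auto. apply isd_const.
  - intros y _. apply (cont_Dt_loc (fun s y => rho s y - rhobar) (fun s y => rt s y - 0)); auto.
    intros s z Hs. apply isd_minus. apply r_dt; auto. apply isd_const.
    apply continuity_2d_pt_minus. apply c_rt; auto. apply c2d_const.
  - apply locally_pos; auto. intros s Hs. apply exR_c. intros; c1b. }
eapply isd_eq; [exact HD|].
rewrite (RI_ext _ (fun y => -1 * (dx rho t y * u t y + rho t y * dx u t y))).
2: { intros y _. transitivity (rt t y - 0). apply is_derive_unique. apply isd_minus. apply r_dt; auto. apply isd_const.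
     assert (Hm : rt t y + dx rho t y * u t y + rho t y * dx u t y = 0) by (eapply mass'; eauto). lra. }
rewrite RI_scal by (apply exR_c; intros; c1b).
rewrite (RI_deriv (fun y => rho t y * u t y)).
- destruct (bnd_zero t L) as [[H1 H2] [H3 H4]]; try lra. rewrite H2, H4.
  match goal with |- @eq _ ?a ?b => change (@eq R a b) end. ring.
- intros y _. apply isd_mult; [apply r_dx | apply u_dx]; auto; lra.
- intros; c1b.
Qed.

Lemma small_zero x : (forall eps, 0 < eps -> Rabs x <= eps) -> x = 0.
Proof.
intros H. destruct (Req_dec x 0) as [E|E]; auto. exfalso.
assert (Hp : 0 < Rabs x) by (apply Rabs_pos_lt; auto).
specialize (H (Rabs x / 2) ltac:(lra)). lra.
Qed.

Lemma c2_Mint t x : continuity_2d_pt (fun s y => rho (Rmax 0 s) y - rhobar) t x.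
Proof. apply continuity_2d_pt_minus. apply c_rho; auto. apply c2d_const. Qed.
Lemma c2_Hint t x : continuity_2d_pt (fun s y => y * u (Rmax 0 s) y) t x.
Proof. apply continuity_2d_pt_mult. apply c2d_id2. apply c_u; auto. Qed.

Lemma M_const L T1 : 0 < T1 -> Rad + sig * T1 < L -> forall t, 0 <= t < T1 -> MLd L t = MLd L 0.
Proof.
intros HT1 HLd t Ht.
assert (Hsig : 0 < sig) by (apply cs_pos; auto).
assert (HL0 : 0 < L). { assert (0 <= sig * T1) by (apply Rmult_le_pos; lra). lra. }
destruct (Rle_lt_or_eq_dec 0 t (proj1 Ht)) as [Ht0|<-]; [|auto].
assert (HD : forall s, 0 < s < T1 -> is_derive (MLd L) s 0).
{ intros s Hs. apply M_deriv. lra. assert (sig * s <= sig * T1) by (apply Rmult_le_compat_l; lra). lra. }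
assert (HDn : forall s, 0 < s < T1 -> is_derive (fun s => - MLd L s) s 0).
{ intros s Hs. eapply isd_ext. apply (isd_scal (MLd L) (-1)). apply HD; auto. ring. intros; simpl; ring. }
apply Rminus_diag_uniq. apply small_zero. intros eps Heps.
destruct (RInt_cont0 (fun s y => rho s y - rhobar) L HL0 (fun t x => c2_Mint t x) eps Heps) as [d [Hd Hc]].
set (t' := Rmin d t / 2).
assert (Hm1 : Rmin d t <= d) by apply Rmin_l. assert (Hm2 : Rmin d t <= t) by apply Rmin_r.
assert (Hm0 : 0 < Rmin d t) by (apply Rmin_pos; lra).
assert (E1 : MLd L t' <= MLd L t) by (apply (mono_up (MLd L) (fun _ => 0) 0 T1); [intros; apply HD; auto | intros; lra | unfold t'; lra | unfold t'; lra | unfold t'; lra]).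
assert (E2 : - MLd L t' <= - MLd L t) by (apply (mono_up (fun s => - MLd L s) (fun _ => 0) 0 T1); [intros; apply HDn; auto | intros; lra | unfold t'; lra | unfold t'; lra | unfold t'; lra]).
assert (E3 := Hc t' ltac:(unfold t'; lra)). change (Rabs (MLd L t' - MLd L 0) <= eps) in E3.
replace (MLd L t) with (MLd L t') by lra. exact E3.
Qed.

Lemma H_ge L T1 : 0 < T1 -> Rad + sig * T1 < L -> (forall s, 0 < s < T1 -> 0 <= PhiLd L s) ->
  forall t, 0 < t < T1 -> HLd L 0 <= HLd L t.
Proof.
intros HT1 HLT HP t Ht.
assert (Hsig : 0 < sig) by (apply cs_pos; auto).
assert (HL0 : 0 < L). { assert (0 <= sig * T1) by (apply Rmult_le_pos; lra). lra. }
assert (HD : forall s, 0 < s < T1 -> is_derive (HLd L) s (PhiLd L s)).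
{ intros s Hs. apply H_deriv. lra. assert (sig * s <= sig * T1) by (apply Rmult_le_compat_l; lra). lra. }
apply Rnot_lt_le. intros Hlt.
set (eps := (HLd L 0 - HLd L t) / 2).
destruct (RInt_cont0 (fun s y => y * u s y) L HL0 (fun t x => c2_Hint t x) eps ltac:(unfold eps; lra)) as [d [Hd Hc]].
set (t' := Rmin d t / 2).
assert (Hm1 : Rmin d t <= d) by apply Rmin_l. assert (Hm2 : Rmin d t <= t) by apply Rmin_r.
assert (Hm0 : 0 < Rmin d t) by (apply Rmin_pos; lra).
assert (E1 : HLd L t' <= HLd L t) by (apply (mono_up (HLd L) (PhiLd L) 0 T1); [intros; apply HD; auto | intros; apply HP; auto | unfold t'; lra | unfold t'; lra | unfold t'; lra]).
assert (E3 := Hc t' ltac:(unfold t'; lra)). change (Rabs (HLd L t' - HLd L 0) <= eps) in E3.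
apply Rabs_le_between in E3. unfold eps in E3. lra.
Qed.

Lemma Phi_lb L t : 0 <= t -> 0 <= L -> PhiLd L t >= QLd L t / 2 + cs K gamma rhobar * cs K gamma rhobar / rhobar * MLd L t.
Proof.
intros Ht HLd. unfold PhiLd, QLd, MLd.
rewrite RI_plus by (apply exR_c; intros; c1b).
rewrite (RI_ext (fun y => u t y * u t y / 2) (fun y => / 2 * (u t y * u t y))) by (intros; field).
rewrite RI_scal by (apply exR_c; intros; c1b).
assert (HH : RInt (fun y => cs K gamma rhobar * cs K gamma rhobar / rhobar * (rho t y - rhobar)) (- L) L
   <= RInt (fun y => hh K gamma (rho t y) - hh K gamma rhobar) (- L) L).
{ apply RInt_le; try lra; try (apply exR_c; intros; c1b).
  intros y _. apply hh_convex; auto. }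
rewrite RI_scal in HH by (apply exR_c; intros; c1b).
lra.
Qed.

End Sol.

Section Sol.
Variables (K gamma rhobar : R) (rho u rt ut : R -> R -> R).
Hypothesis HK : 0 < K.
Hypothesis Hg : 2 <= gamma.
Hypothesis Hrb : 0 < rhobar.
Hypothesis Hr_dx : forall t x, 0 <= t -> ex_derive (fun y => rho t y) x.
Hypothesis Hr_dt : forall t x, 0 < t -> ex_derive (fun s => rho s x) t.
Hypothesis Hr_c : forall t x, 0 <= t -> cont_half rho t x.
Hypothesis Hr_dxc : forall t x, 0 <= t -> cont_half (dx rho) t x.
Hypothesis Hrt_eq : forall t x, 0 < t -> rt t x = dt rho t x.
Hypothesis Hrt_c : forall t x, 0 <= t -> cont_half rt t x.
Hypothesis Hu_dx : forall t x, 0 <= t -> ex_derive (fun y => u t y) x.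
Hypothesis Hu_dt : forall t x, 0 < t -> ex_derive (fun s => u s x) t.
Hypothesis Hu_c : forall t x, 0 <= t -> cont_half u t x.
Hypothesis Hu_dxc : forall t x, 0 <= t -> cont_half (dx u) t x.
Hypothesis Hut_eq : forall t x, 0 < t -> ut t x = dt u t x.
Hypothesis Hut_c : forall t x, 0 <= t -> cont_half ut t x.
Hypothesis Hpos : forall t x, 0 <= t -> 0 < rho t x.
Hypothesis Hmass : forall t x, 0 < t ->
     dt rho t x + Derive (fun y => rho t y * u t y) x = 0.
Hypothesis Hmom : forall t x, 0 < t ->
     rho t x * (dt u t x + u t x * dx u t x)
     + Derive (fun y => K * Rpower (rho t y) gamma) x = 0.

Local Notation W := (Wv K gamma rhobar rho u).
Local Notation WT := (Wt K gamma rho rt ut).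
Local Notation WX := (Wx K gamma rho u).
Local Notation LAM := (lam K gamma rho u).
Local Notation LAMX := (lamx K gamma rho u).

Variable Rad : R.
Hypothesis HR : 0 < Rad.
Hypothesis Hinit : forall x, Rad < Rabs x -> rho 0 x = rhobar /\ u 0 x = 0.
Local Notation sig := (cs K gamma rhobar).
Hypothesis HH0 : RInt_gen (fun x => x * u 0 x) (Rbar_locally m_infty) (Rbar_locally p_infty) > 8 * sig * Rad ^ 2 / 3.
Hypothesis HM0 : RInt_gen (fun x => rho 0 x - rhobar) (Rbar_locally m_infty) (Rbar_locally p_infty) >= 0.

Local Notation HL := (HLd u).
Local Notation ML := (MLd rhobar rho).
Local Notation QL := (QLd u).
Local Notation PhiL := (PhiLd K gamma rhobar rho u).

Lemma fps2 t x : 0 <= t -> Rad + sig * t < Rabs x -> rho t x = rhobar /\ u t x = 0.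
Proof. intros; eapply (fps K gamma rhobar rho u rt ut); eauto. Qed.

Lemma cpu2 t y : 0 <= t -> continuity_pt (fun y => u t y) y.
Proof. intros; apply (c2d_x u); auto; apply c_u; auto. Qed.
Lemma cprho2 t y : 0 <= t -> continuity_pt (fun y => rho t y) y.
Proof. intros; apply (c2d_x rho); auto; apply c_rho; auto. Qed.

Lemma CS_app L t : 0 <= t -> Rad + sig * t < L ->
  (HL L t) ^ 2 <= 2 * (Rad + sig * t) ^ 3 / 3 * QL L t.
Proof.
intros Ht HLt. assert (Hs : 0 < sig) by (apply cs_pos; auto).
assert (0 <= sig * t) by (apply Rmult_le_pos; lra).
unfold HLd, QLd. apply (CS (u t)). lra. intros; apply cpu2; auto.
intros y Hy. apply (fps2 t y); auto.
Qed.

Lemma HL0 L : Rad <= L -> HL L 0 = RInt_gen (fun x => x * u 0 x) (Rbar_locally m_infty) (Rbar_locally p_infty).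
Proof.
intros HLR. unfold HLd. symmetry. apply RIgen. lra. intros; apply cp_mult. apply cp_id. apply cpu2; lra.
intros y Hy. destruct (Hinit y) as [_ H2]. lra. rewrite H2; ring.
Qed.

Lemma ML0 L : Rad <= L -> ML L 0 = RInt_gen (fun x => rho 0 x - rhobar) (Rbar_locally m_infty) (Rbar_locally p_infty).
Proof.
intros HLR. unfold MLd. symmetry. apply RIgen. lra. intros; apply cp_minus. apply cprho2; lra. apply cp_const.
intros y Hy. destruct (Hinit y) as [H1 _]. lra. rewrite H1; ring.
Qed.

Lemma contra : False.
Proof.
assert (Hs : 0 < sig) by (apply cs_pos; auto).
set (H0 := RInt_gen (fun x => x * u 0 x) (Rbar_locally m_infty) (Rbar_locally p_infty)) in *.
set (M0 := RInt_gen (fun x => rho 0 x - rhobar) (Rbar_locally m_infty) (Rbar_locally p_infty)) in *.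
assert (HR2 : 0 < Rad ^ 2) by (apply pow_lt; lra).
assert (HH0p : 0 < H0). { assert (0 < 8 * sig * Rad ^ 2 / 3) by (apply Rdiv_lt_0_compat; [apply Rmult_lt_0_compat; lra|lra]). lra. }
set (tp := Rmin 1 ((3 * H0 - 8 * sig * Rad ^ 2) / (16 * sig ^ 2 * (2 * Rad + sig)))).
assert (Hq : 0 < (3 * H0 - 8 * sig * Rad ^ 2) / (16 * sig ^ 2 * (2 * Rad + sig))).
{ apply Rdiv_lt_0_compat. lra. apply Rmult_lt_0_compat. apply Rmult_lt_0_compat. lra. apply pow_lt; lra. lra. }
assert (Htp0 : 0 < tp) by (apply Rmin_pos; lra).
assert (Htp1 : tp <= 1) by apply Rmin_l.
assert (Htp2 : tp <= (3 * H0 - 8 * sig * Rad ^ 2) / (16 * sig ^ 2 * (2 * Rad + sig))) by apply Rmin_r.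
set (ap := Rad + sig * tp).
assert (Hap : 8 * sig * ap ^ 2 < 3 * H0).
{ assert (Hk : 16 * sig ^ 2 * (2 * Rad + sig) * tp <= 3 * H0 - 8 * sig * Rad ^ 2).
  { apply Rmult_le_reg_r with (/ (16 * sig ^ 2 * (2 * Rad + sig))).
    apply Rinv_0_lt_compat. apply Rmult_lt_0_compat. apply Rmult_lt_0_compat. lra. apply pow_lt; lra. lra.
    replace (16 * sig ^ 2 * (2 * Rad + sig) * tp * / (16 * sig ^ 2 * (2 * Rad + sig))) with tp.
    exact Htp2. field. repeat split; try lra; try (apply pow_nonzero; lra). }
  assert (E : 8 * sig * ap ^ 2 = 8 * sig * Rad ^ 2 + 16 * sig ^ 2 * Rad * tp + 8 * sig ^ 3 * (tp * tp)) by (unfold ap; ring).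
  assert (Hs3 : 0 < sig ^ 3) by (apply pow_lt; lra).
  assert (E2 : sig ^ 3 * (tp * tp) <= sig ^ 3 * tp) by (apply Rmult_le_compat_l; nra).
  assert (E3 : 16 * sig ^ 2 * (2 * Rad + sig) * tp = 32 * sig ^ 2 * Rad * tp + 16 * sig ^ 3 * tp) by ring.
  lra. }
assert (Hap0 : Rad < ap) by (unfold ap; nra).
set (m := 3 / (8 * sig * ap ^ 2) - / H0).
assert (Hm : 0 < m).
{ unfold m. assert (0 < ap ^ 2) by (apply pow_lt; lra).
  assert (/ H0 < 3 / (8 * sig * ap ^ 2)).
  { apply Rmult_lt_reg_r with (H0 * (8 * sig * ap ^ 2)). apply Rmult_lt_0_compat; nra.
    replace (/ H0 * (H0 * (8 * sig * ap ^ 2))) with (8 * sig * ap ^ 2) by (field; lra).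
    replace (3 / (8 * sig * ap ^ 2) * (H0 * (8 * sig * ap ^ 2))) with (3 * H0) by (field; split; nra).
    lra. }
  lra. }
set (T0 := tp + 1 + 3 / (8 * sig ^ 2 * m * Rad)).
assert (Hs2 : 0 < sig ^ 2) by (apply pow_lt; lra).
assert (Hden : 0 < 8 * sig ^ 2 * m * Rad) by (apply Rmult_lt_0_compat; [apply Rmult_lt_0_compat; [apply Rmult_lt_0_compat|]|]; lra).
assert (Hden2 : 0 < 8 * sig * m * Rad) by (apply Rmult_lt_0_compat; [apply Rmult_lt_0_compat; [apply Rmult_lt_0_compat|]|]; lra).
assert (Hden3 : 0 < 8 * sig * m) by (apply Rmult_lt_0_compat; [apply Rmult_lt_0_compat|]; lra).
assert (HT0a : 0 < 3 / (8 * sig ^ 2 * m * Rad)) by (apply Rdiv_lt_0_compat; lra).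
set (T1 := T0 + 1).
set (L := Rad + sig * T1 + 1).
assert (HsT1 : 0 <= sig * T1) by (apply Rmult_le_pos; unfold T1, T0; lra).
assert (HLR : Rad <= L) by (unfold L; lra).
assert (Hin : forall s, 0 <= s < T1 -> Rad + sig * s < L).
{ intros s Hs'. assert (sig * s <= sig * T1) by (apply Rmult_le_compat_l; lra). unfold L; lra. }
assert (HML : forall s, 0 <= s < T1 -> ML L s = M0).
{ intros s Hs'. transitivity (ML L 0); [|apply ML0; auto]. eapply (M_const K gamma rhobar rho u rt ut) with (T1 := T1) (Rad := Rad); eauto; unfold L, T1, T0 in *; lra. }
assert (HQ : forall s, 0 <= s -> 0 <= QL L s).
{ intros s Hs'. unfold QLd. apply RInt_ge_0. lra. apply exR_c; intros; apply cp_mult; apply cpu2; auto.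
  intros; nra. }
assert (HPhi : forall s, 0 <= s < T1 -> QL L s / 2 <= PhiL L s).
{ intros s Hs'. assert (Hb := Phi_lb K gamma rhobar rho u HK Hg Hrb Hr_c Hu_c Hpos L s ltac:(lra) ltac:(lra)).
  rewrite HML in Hb by auto.
  assert (0 <= sig * sig / rhobar * M0) by (apply Rmult_le_pos; [apply Rdiv_le_0_compat; nra | lra]). lra. }
assert (HHge : forall s, 0 < s < T1 -> H0 <= HL L s).
{ intros s Hs'. replace H0 with (HL L 0) by (apply HL0; auto). eapply (H_ge K gamma rhobar rho u rt ut) with (T1 := T1) (Rad := Rad); eauto; try (unfold L, T1, T0 in *; lra). intros s0 Hs0. assert (0 <= QL L s0) by (apply HQ; lra). assert (QL L s0 / 2 <= PhiL L s0) by (apply HPhi; lra). lra. }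
set (G := fun s => / HL L s + (- (3 / (8 * sig))) * / ((Rad + sig * s) * (Rad + sig * s))).
set (G' := fun s => - PhiL L s / (HL L s) ^ 2 + (- (3 / (8 * sig))) * (- (sig * (Rad + sig * s) + (Rad + sig * s) * sig) / ((Rad + sig * s) * (Rad + sig * s)) ^ 2)).
assert (HGd : forall s, 0 < s < T1 -> is_derive (fun s => - G s) s (- G' s)).
{ intros s Hs'. unfold G, G'.
  assert (Hhp : 0 < HL L s) by (assert (H0 <= HL L s) by (apply HHge; auto); lra).
  assert (Has : 0 < Rad + sig * s) by nra.
  apply (is_derive_opp (fun s => / HL L s + (- (3 / (8 * sig))) * / ((Rad + sig * s) * (Rad + sig * s)))).
  apply isd_plus.
  - apply is_derive_inv; [eapply (H_deriv K gamma rhobar rho u rt ut) with (Rad := Rad); eauto; try lra; apply Hin; lra | lra].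
  - apply isd_scal. apply (is_derive_inv (fun s => (Rad + sig * s) * (Rad + sig * s))).
    eapply isd_eq. apply (isd_mult (fun s => Rad + sig * s) (fun s => Rad + sig * s)); apply (isd_plus (fun _ => Rad) (fun s => sig * s)); [apply isd_const | apply (isd_scal (fun s => s)), isd_id | apply isd_const | apply (isd_scal (fun s => s)), isd_id]. cbv beta; ring.
    nra. }
assert (HGn : forall s, 0 < s < T1 -> 0 <= - G' s).
{ intros s Hs'. unfold G'.
  assert (Hhp : 0 < HL L s) by (assert (H0 <= HL L s) by (apply HHge; auto); lra).
  set (a := Rad + sig * s) in *.
  assert (Has : 0 < a) by (unfold a; nra).
  assert (Hcs := CS_app L s ltac:(lra) ltac:(apply Hin; lra)). fold a in Hcs.
  assert (Hp := HPhi s ltac:(lra)).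
  set (P := PhiL L s) in *. set (Hs0 := HL L s) in *. set (Q := QL L s) in *.
  assert (Hkey : 3 * Hs0 ^ 2 <= 4 * a ^ 3 * P).
  { assert (0 < a ^ 3) by (apply pow_lt; lra). nra. }
  replace (- (- P / Hs0 ^ 2 + - (3 / (8 * sig)) * (- (sig * a + a * sig) / (a * a) ^ 2)))
    with ((4 * a ^ 3 * P - 3 * Hs0 ^ 2) / (4 * a ^ 3 * Hs0 ^ 2)) by (field; split; lra).
  apply Rdiv_le_0_compat. lra. apply Rmult_lt_0_compat. apply Rmult_lt_0_compat. lra. apply pow_lt; lra. apply pow_lt; lra. }
assert (Hmono : - G tp <= - G T0).
{ apply (mono_up (fun s => - G s) (fun s => - G' s) 0 T1); [intros; apply HGd; auto | intros; apply HGn; auto | lra | unfold T0; lra | unfold T1; lra]. }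
assert (HT0p : 0 < T0 < T1) by (unfold T1, T0; lra).
assert (HtpT : 0 < tp < T1) by (unfold T1, T0; lra).
assert (HHT0 : 0 < HL L T0) by (assert (H0 <= HL L T0) by (apply HHge; auto); lra).
assert (HHtp : H0 <= HL L tp) by (apply HHge; auto).
assert (Htp_inv : / HL L tp <= / H0) by (apply Rinv_le_contravar; lra).
set (aT := Rad + sig * T0).
assert (HaT : 3 / (8 * sig * aT ^ 2) < m).
{ assert (HaT0 : sig * T0 > 3 / (8 * sig * m * Rad)).
  { unfold T0. replace (3 / (8 * sig * m * Rad)) with (sig * (3 / (8 * sig ^ 2 * m * Rad))) by (field; repeat split; lra).
    apply Rmult_lt_compat_l. lra. lra. }
  assert (HaT1 : aT > 3 / (8 * sig * m * Rad)) by (unfold aT; lra).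
  assert (HaTp : Rad < aT) by (unfold aT; assert (0 < sig * T0) by (apply Rmult_lt_0_compat; lra); lra).
  assert (HaT2 : aT ^ 2 > 3 / (8 * sig * m)).
  { 
    replace (3 / (8 * sig * m)) with (Rad * (3 / (8 * sig * m * Rad))) by (field; repeat split; lra).
    simpl. rewrite Rmult_1_r. apply Rmult_gt_0_lt_compat; try lra.
    apply Rdiv_lt_0_compat; lra. }
  assert (0 < aT ^ 2) by (apply pow_lt; lra).
  apply Rmult_lt_reg_r with (aT ^ 2 * (8 * sig)). apply Rmult_lt_0_compat; lra.
  replace (3 / (8 * sig * aT ^ 2) * (aT ^ 2 * (8 * sig))) with 3 by (field; split; lra).
  apply Rmult_gt_reg_l with (/ (8 * sig * m)). apply Rinv_0_lt_compat. lra.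
  replace (/ (8 * sig * m) * 3) with (3 / (8 * sig * m)) by (unfold Rdiv; ring).
  replace (/ (8 * sig * m) * (m * (aT ^ 2 * (8 * sig)))) with (aT ^ 2) by (field; split; lra).
  lra. }
unfold G in Hmono. fold ap aT in Hmono.
assert (HinvT : 0 < / HL L T0) by (apply Rinv_0_lt_compat; lra).
assert (E1 : / (ap * ap) = 1 / ap ^ 2) by (simpl; field; lra).
assert (E2 : / (aT * aT) = 1 / aT ^ 2).
{ assert (0 < aT) by (unfold aT; nra). simpl; field; lra. }
rewrite E1, E2 in Hmono.
assert (E3 : - (3 / (8 * sig)) * (1 / ap ^ 2) = - (3 / (8 * sig * ap ^ 2))) by (field; split; [nra|lra]).
assert (E4 : - (3 / (8 * sig)) * (1 / aT ^ 2) = - (3 / (8 * sig * aT ^ 2))).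
{ assert (0 < aT) by (unfold aT; nra). field; split; [nra|lra]. }
rewrite E3, E4 in Hmono.
unfold m in HaT. lra.
Qed.

End Sol.

Theorem theorem8 (K gamma rhobar Rad : R) (rho u : R -> R -> R) :
  0 < K -> 2 <= gamma -> 0 < rhobar -> 0 < Rad ->
  (forall x, Rad < Rabs x -> rho 0 x = rhobar /\ u 0 x = 0) ->
  RInt_gen (fun x => x * u 0 x) (Rbar_locally m_infty) (Rbar_locally p_infty)
    > 8 * sqrt (K * gamma * Rpower rhobar (gamma - 1)) * Rad ^ 2 / 3 ->
  RInt_gen (fun x => rho 0 x - rhobar) (Rbar_locally m_infty) (Rbar_locally p_infty)
    >= 0 ->
  ~ global_C1_euler_solution K gamma rho u.
Proof.
intros HK Hg Hrb HR Hinit HH0 HM0 Hsol.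
destruct Hsol as [[Hr_dx [Hr_dt [Hr_c [Hr_dxc [rt [Hrt_eq Hrt_c]]]]]]
  [[Hu_dx [Hu_dt [Hu_c [Hu_dxc [ut [Hut_eq Hut_c]]]]]] [Hpos [Hmass Hmom]]]].
assert (E : cs K gamma rhobar = sqrt (K * gamma * Rpower rhobar (gamma - 1))) by (apply cs_sigma; auto).
rewrite <- E in HH0.
eapply (contra K gamma rhobar rho u rt ut) with (Rad := Rad); eauto.
Qed.
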